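(* Assume (H2) and additionally that $g$ is bounded, $\|g\|_\infty:=\sup_y|g(y)|<\infty$. Let $x\in\mathcal C^{p\text{-var}}([a,b],\mathbb R^m)$ and let $y$ be the solution on $[a,b]$ of $y_t=y_a+\int_a^t[Ay_s+f(y_s)]ds+\int_a^tg(y_s)dx_s$. Then $$\|y\|_{p\text{-var},[a,b]}\le\Big[\|y_a\|+\Big(\tfrac{\|f(0)\|}{L}\vee2\|g\|_\infty\Big)\big(1+|||x|||_{p\text{-var},[a,b]}\big)N_{[a,b]}(x)\Big]e^{2L(b-a)}N_{[a,b]}(x)^{\frac{p-1}{p}}.$$
   Context: Fix $d,m\ge1$ and $p\in(1,2)$. For a path $x:[a,b]\to\mathbb R^r$: $|||x|||_{p\text{-var},[a,b]}=\big(\sup_{\Pi}\sum_i\|x_{t_{i+1}}-x_{t_i}\|^p\big)^{1/p}$ over finite partitions of $[a,b]$; $\|x\|_{p\text{-var},[a,b]}=\|x_a\|+|||x|||_{p\text{-var},[a,b]}$. Integrals against $dx$ are Young integrals. $A\in\mathbb R^{d\times d}$ with operator norm $|A|$. (H2): $f:\mathbb R^d\to\mathbb R^d$, $g:\mathbb R^d\to\mathbb R^{d\times m}$ globally Lipschitz with constants $C_f$, $C_g>0$; $g\in C^1$ with $Dg$ globally Lipschitz. $L=|A|+C_f$, $K=(1-2^{1-2/p})^{-1}$, $a\vee b=\max\{a,b\}$. Greedy times: $\gamma=\frac1{2(K+1)C_g}$, $\tau_0=a$, $\tau_{k+1}=\inf\{t>\tau_k:|||x|||_{p\text{-var},[\tau_k,t]}=\gamma\}\wedge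 b$, $N_{[a,b]}(x)=\min\{k\ge1:\tau_k=b\}$. *)

(* Defs.v *)
From Stdlib Require Import Reals Lra List ClassicalEpsilon Classical.
Open Scope R_scope.

(** Vectors of R^n are represented as [nat -> R] (only the first n
    coordinates matter), d x m matrices as [nat -> nat -> R]. *)
Definition vec := nat -> R.
Definition mat := nat -> nat -> R.

Fixpoint sumR (n : nat) (f : nat -> R) : R :=
  match n with O => 0 | S k => sumR k f + f k end.

Definition vzero : vec := fun _ => 0.
Definition vadd (u v : vec) : vec := fun i => u i + v i.
Definition vsub (u v : vec) : vec := fun i => u i - v i.
Definition msub (M N : mat) : mat := fun i j => M i j - N i j.

Definition vnorm (n : nat) (v : vec) : R := sqrt (sumR n (fun i => v i ^ 2)).

Definition mvmul (c : nat) (M : mat) (v : vec) : vec :=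
  fun i => sumR c (fun j => M i j * v j).

(** Supremum of a set of reals (0 if empty or unbounded above);
    infimum likewise. *)
Definition Rsup (E : R -> Prop) : R :=
  match excluded_middle_informative (bound E /\ exists x, E x) with
  | left H => proj1_sig (completeness E (proj1 H) (proj2 H))
  | right _ => 0
  end.
Definition Rinf (E : R -> Prop) : R := - Rsup (fun x => E (- x)).

Definition opnorm (r c : nat) (M : mat) : R :=
  Rsup (fun s => exists v, vnorm c v <= 1 /\ s = vnorm r (mvmul c M v)).

(** Real power x^q for x >= 0 (with 0^q = 0). *)
Definition rpow (x q : R) : R := if Rle_dec x 0 then 0 else Rpower x q.

(** A partition a = t_0 < t_1 < ... < t_n = b of [a,b] is encoded by the
    list [t_1; ...; t_n] (empty iff a = b). *)
Fixpoint chain_lt (t0 : R) (l : list R) : Prop :=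
  match l with nil => True | t1 :: l' => t0 < t1 /\ chain_lt t1 l' end.
Definition is_partition (a b : R) (l : list R) : Prop :=
  chain_lt a l /\ last l a = b.

Fixpoint mesh (t0 : R) (l : list R) : R :=
  match l with nil => 0 | t1 :: l' => Rmax (t1 - t0) (mesh t1 l') end.

Fixpoint psum (r : nat) (p : R) (x : R -> vec) (t0 : R) (l : list R) : R :=
  match l with
  | nil => 0
  | t1 :: l' => rpow (vnorm r (vsub (x t1) (x t0))) p + psum r p x t1 l'
  end.

Definition psums (r : nat) (p : R) (x : R -> vec) (a b : R) : R -> Prop :=
  fun s => exists l, is_partition a b l /\ s = psum r p x a l.

Definition pvar_semi (r : nat) (p : R) (x : R -> vec) (a b : R) : R :=
  rpow (Rsup (psums r p x a b)) (1 / p).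

Definition pvar_norm (r : nat) (p : R) (x : R -> vec) (a b : R) : R :=
  vnorm r (x a) + pvar_semi r p x a b.

Definition in_Cpvar (r : nat) (p : R) (x : R -> vec) (a b : R) : Prop :=
  (forall t, a <= t <= b -> forall eps, 0 < eps -> exists delta, 0 < delta /\
     forall s, a <= s <= b -> Rabs (s - t) < delta ->
       vnorm r (vsub (x s) (x t)) < eps)
  /\ bound (psums r p x a b).

Fixpoint rs_sum (c : nat) (H : R -> mat) (X : R -> vec) (t0 : R) (l : list R)
  : vec :=
  match l with
  | nil => vzero
  | t1 :: l' => vadd (mvmul c (H t0) (vsub (X t1) (X t0))) (rs_sum c H X t1 l')
  end.

(** I = int_a^b H(s) dX(s) as the limit of Riemann-Stieltjes sums when the
    mesh tends to 0 (Young integral; for X(s) = s the usual integral). *)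
Definition RS_integral (d c : nat) (H : R -> mat) (X : R -> vec) (a b : R)
  (I : vec) : Prop :=
  forall eps, 0 < eps -> exists delta, 0 < delta /\
    forall l, is_partition a b l -> mesh a l < delta ->
      vnorm d (vsub (rs_sum c H X a l) I) < eps.

Definition is_solution (d m : nat) (A : mat) (f : vec -> vec) (g : vec -> mat)
  (x : R -> vec) (a b : R) (y : R -> vec) : Prop :=
  forall t, a <= t <= b ->
    exists I1 I2 : vec,
      RS_integral d 1 (fun s => fun i _ => vadd (mvmul d A (y s)) (f (y s)) i)
                  (fun s => fun _ => s) a t I1
      /\ RS_integral d m (fun s => g (y s)) x a t I2
      /\ forall i, (i < d)%nat -> y t i = y a i + I1 i + I2 i.

Definition lipschitz_f (d : nat) (f : vec -> vec) (Cf : R) : Prop :=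
  forall u v, vnorm d (vsub (f u) (f v)) <= Cf * vnorm d (vsub u v).
Definition lipschitz_g (d m : nat) (g : vec -> mat) (Cg : R) : Prop :=
  forall u v, opnorm d m (msub (g u) (g v)) <= Cg * vnorm d (vsub u v).
(** g is C^1 (Frechet) with globally Lipschitz derivative Dg; Dg u is the
    tensor (i,j,k) |-> d g_{ij} / d u_k (u). *)
Definition C1_Lip_deriv (d m : nat) (g : vec -> mat) : Prop :=
  exists Dg : vec -> nat -> nat -> nat -> R,
    (forall u eps, 0 < eps -> exists delta, 0 < delta /\
       forall h, vnorm d h < delta ->
         opnorm d m (fun i j => g (vadd u h) i j - g u i j
                                 - sumR d (fun k => Dg u i j k * h k))
         <= eps * vnorm d h)
    /\ exists CD, forall u v i j k, (i < d)%nat -> (j < m)%nat -> (k < d)%nat ->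
         Rabs (Dg u i j k - Dg v i j k) <= CD * vnorm d (vsub u v).

Definition sup_norm_g (d m : nat) (g : vec -> mat) : R :=
  Rsup (fun s => exists u, s = opnorm d m (g u)).

Definition Kp (p : R) : R := / (1 - Rpower 2 (1 - 2 / p)).
Definition gammaG (p Cg : R) : R := 1 / (2 * (Kp p + 1) * Cg).

(** Greedy times: tau_{k+1} = inf{t > tau_k : |||x|||_{[tau_k,t]} = gamma} /\ b
    (inf of the empty set = +oo). *)
Definition greedy_next (r : nat) (p gam : R) (x : R -> vec) (b s : R) : R :=
  let E := fun t => s < t <= b /\ pvar_semi r p x s t = gam in
  match excluded_middle_informative (exists t, E t) with
  | left _ => Rmin (Rinf E) b
  | right _ => b
  end.

Fixpoint tau (r : nat) (p gam : R) (x : R -> vec) (a b : R) (k : nat) : R :=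
  match k with
  | O => a
  | S k' => greedy_next r p gam x b (tau r p gam x a b k')
  end.

Definition is_N (r : nat) (p gam : R) (x : R -> vec) (a b : R) (n : nat) : Prop :=
  (1 <= n)%nat /\ tau r p gam x a b n = b /\
  forall k, (1 <= k)%nat -> (k < n)%nat -> tau r p gam x a b k <> b.

(* Main.v *)
Require Import Defs.
From Stdlib Require Import Reals Lra Lia List Classical ClassicalEpsilon FunctionalExtensionality.
From Coquelicot Require Import Coquelicot.
Open Scope R_scope.

Lemma rpow_nonneg x q : 0 <= rpow x q.
Proof. unfold rpow. destruct (Rle_dec x 0). lra. unfold Rpower. left; apply exp_pos. Qed.

Lemma rpow_pos x q : 0 < x -> rpow x q = Rpower x q.
Proof. intros. unfold rpow. destruct (Rle_dec x 0). lra. auto. Qed.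

Lemma rpow_pos' x q : 0 < x -> 0 < rpow x q.
Proof. intros. rewrite rpow_pos; auto. unfold Rpower; apply exp_pos. Qed.

Lemma rpow_0 q : rpow 0 q = 0.
Proof. unfold rpow. destruct (Rle_dec 0 0). auto. lra. Qed.

Lemma rpow_le0 x q : x <= 0 -> rpow x q = 0.
Proof. intros. unfold rpow. destruct (Rle_dec x 0). auto. lra. Qed.

Lemma rpow_1 x : 0 <= x -> rpow x 1 = x.
Proof. intros. destruct (Req_dec x 0). subst; apply rpow_0.
rewrite rpow_pos by lra. apply Rpower_1; lra. Qed.

Lemma rpow_mono x y q : 0 <= q -> 0 <= x <= y -> rpow x q <= rpow y q.
Proof. intros Hq Hxy. destruct (Req_dec x 0). subst; rewrite rpow_0; apply rpow_nonneg.
rewrite !rpow_pos by lra. apply Rle_Rpower_l; lra. Qed.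

Lemma rpow_mono_strict x y q : 0 < q -> 0 <= x < y -> rpow x q < rpow y q.
Proof. intros Hq Hxy. destruct (Req_dec x 0). subst; rewrite rpow_0; apply rpow_pos'; lra.
rewrite !rpow_pos by lra. apply Rlt_Rpower_l; lra. Qed.

Lemma rpow_mul x y q : 0 <= x -> 0 <= y -> rpow (x*y) q = rpow x q * rpow y q.
Proof. intros. destruct (Req_dec x 0). subst. rewrite Rmult_0_l, rpow_0; ring.
destruct (Req_dec y 0). subst. rewrite Rmult_0_r, rpow_0; ring.
rewrite !rpow_pos by nra. rewrite Rpower_mult_distr; auto; lra. Qed.

Lemma rpow_rpow x q r : 0 <= x -> 0 < q -> rpow (rpow x q) r = rpow x (q*r).
Proof. intros. destruct (Req_dec x 0). subst. rewrite !rpow_0; auto.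
rewrite (rpow_pos x) by lra. rewrite rpow_pos. rewrite rpow_pos by lra. apply Rpower_mult.
unfold Rpower; apply exp_pos. Qed.

Lemma rpow_inv x q : 0 <= x -> 0 < q -> rpow (rpow x q) (1/q) = x.
Proof. intros. rewrite rpow_rpow by auto. replace (q * (1/q)) with 1 by (field; lra).
apply rpow_1; auto. Qed.

Lemma rpow_inv' x q : 0 <= x -> 0 < q -> rpow (rpow x (1/q)) q = x.
Proof. intros. rewrite rpow_rpow by (auto; apply Rdiv_lt_0_compat; lra). replace ((1/q)*q) with 1 by (field; lra).
apply rpow_1; auto. Qed.

Lemma rpow_one q : rpow 1 q = 1.
Proof. rewrite rpow_pos by lra. unfold Rpower. rewrite ln_1, Rmult_0_r, exp_0. auto. Qed.

Lemma rpow_plus x q r : 0 < x -> rpow x (q + r) = rpow x q * rpow x r.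
Proof. intros. rewrite !rpow_pos by auto. apply Rpower_plus. Qed.

Lemma bern_exp q s : (1 <= q \/ q <= 0) -> 1 + q * (exp s - 1) <= exp (q*s).
Proof.
  intros Hq.
  set (f := fun s => exp (q*s) - 1 - q*(exp s - 1)).
  assert (Hd : forall c, derivable_pt_lim f c (q*exp(q*c) - q*exp c)).
  { intro c. apply is_derive_Reals. unfold f. auto_derive. auto. ring. }
  assert (Hf0 : f 0 = 0). { unfold f. rewrite Rmult_0_r, exp_0. ring. }
  enough (0 <= f s) by (unfold f in H; lra).
  destruct (Rtotal_order s 0) as [Hs|[Hs|Hs]].
  - destruct (MVT_cor2 f _ s 0 Hs (fun c _ => Hd c)) as [c [Hc1 Hc2]].
    assert (q * exp (q*c) - q * exp c <= 0).
    { destruct Hq.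
      - assert (exp (q*c) <= exp c). { destruct (Req_dec (q*c) c). rewrite H0; lra. left; apply exp_increasing. nra. }
        nra.
      - assert (exp c <= exp (q*c)). { destruct (Req_dec (q*c) c). rewrite H0; lra. left; apply exp_increasing. nra. }
        nra. }
    nra.
  - subst. lra.
  - destruct (MVT_cor2 f _ 0 s Hs (fun c _ => Hd c)) as [c [Hc1 Hc2]].
    assert (0 <= q * exp (q*c) - q * exp c).
    { destruct Hq.
      - assert (exp c <= exp (q*c)). { destruct (Req_dec (q*c) c). rewrite H0; lra. left; apply exp_increasing. nra. }
        nra.
      - assert (exp (q*c) <= exp c). { destruct (Req_dec (q*c) c). rewrite H0; lra. left; apply exp_increasing. nra. }
        nra. }
    nra.
Qed.

Lemma bernoulli t q : 0 < t -> (1 <= q \/ q <= 0) -> 1 + q * (t - 1) <= rpow t q.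
Proof. intros. rewrite rpow_pos by auto. unfold Rpower.
  pose proof (bern_exp q (ln t) H0). rewrite exp_ln in H1 by auto. replace (ln t * q) with (q * ln t) in * by ring. lra. Qed.

Lemma tangent q x w : 1 <= q -> 0 <= x -> 0 <= w ->
  rpow w q + q * rpow w (q-1) * (x - w) <= rpow x q.
Proof.
  intros Hq Hx Hw. destruct (Req_dec w 0). subst. rewrite !rpow_0. rewrite Rmult_0_r, Rmult_0_l. pose proof (rpow_nonneg x q); lra.
  destruct (Req_dec x 0). subst. rewrite rpow_0.
  assert (Ew : rpow w q = w * rpow w (q-1)). { replace q with (1 + (q-1)) at 1 by ring. rewrite rpow_plus by lra. rewrite rpow_1; lra. }
  pose proof (rpow_nonneg w (q-1)). assert (0 <= w * rpow w (q-1)) by (apply Rmult_le_pos; lra).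
  rewrite Ew. replace (w * rpow w (q - 1) + q * rpow w (q - 1) * (0 - w)) with ((1-q) * (w * rpow w (q-1))) by ring.
  assert (0 <= (q-1) * (w * rpow w (q-1))) by (apply Rmult_le_pos; lra). lra.
  pose proof (bernoulli (x/w) q) as B. assert (0 < x/w) by (apply Rdiv_lt_0_compat; lra).
  specialize (B H1 (or_introl Hq)).
  assert (E: rpow x q = rpow w q * rpow (x/w) q). { rewrite <- rpow_mul by lra. f_equal. field. lra. }
  assert (E2: rpow w q = w * rpow w (q-1)). { replace q with (1 + (q-1)) at 1 by ring. rewrite rpow_plus by lra. rewrite rpow_1; lra. }
  rewrite E. assert (0 < rpow w q) by (apply rpow_pos'; lra).
  apply Rle_trans with (rpow w q * (1 + q * (x/w - 1))). 2: apply Rmult_le_compat_l; lra.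
  rewrite E2. right. field. lra.
Qed.

Lemma rpow_convex q lam x y : 1 <= q -> 0 <= lam <= 1 -> 0 <= x -> 0 <= y ->
  rpow (lam*x + (1-lam)*y) q <= lam * rpow x q + (1-lam) * rpow y q.
Proof.
  intros Hq Hl Hx Hy. set (z := lam*x + (1-lam)*y).
  assert (Hz : 0 <= z) by (unfold z; nra).
  pose proof (tangent q x z Hq Hx Hz). pose proof (tangent q y z Hq Hy Hz).
  set (R0 := rpow z (q-1)) in *.
  assert (lam * (rpow z q + q * R0 * (x - z)) + (1-lam) * (rpow z q + q * R0 * (y - z)) = rpow z q).
  { unfold z. ring. }
  assert (lam * (rpow z q + q * R0 * (x - z)) <= lam * rpow x q) by (apply Rmult_le_compat_l; lra).
  assert ((1-lam) * (rpow z q + q * R0 * (y - z)) <= (1-lam) * rpow y q) by (apply Rmult_le_compat_l; lra).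
  lra.
Qed.

Lemma rpow_le_self lam q : 1 <= q -> 0 <= lam <= 1 -> rpow lam q <= lam.
Proof. intros. destruct (Req_dec lam 0). subst. rewrite rpow_0; lra.
  replace q with (1 + (q-1)) by ring. rewrite rpow_plus by lra. rewrite rpow_1 by lra.
  assert (rpow lam (q-1) <= rpow 1 (q-1)) by (apply rpow_mono; lra). rewrite rpow_one in H2.
  pose proof (rpow_nonneg lam (q-1)). nra. Qed.

Lemma rpow_superadd q x y : 1 <= q -> 0 <= x -> 0 <= y -> rpow x q + rpow y q <= rpow (x+y) q.
Proof. intros. destruct (Req_dec (x+y) 0). assert (x = 0) by lra. assert (y=0) by lra. subst.
  rewrite Rplus_0_r, rpow_0. lra.
  assert (Ex: rpow x q = rpow (x/(x+y)) q * rpow (x+y) q). { rewrite <- rpow_mul. f_equal. field. auto.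
   apply Rmult_le_pos; auto. left; apply Rinv_0_lt_compat; lra. lra. }
  assert (Ey: rpow y q = rpow (y/(x+y)) q * rpow (x+y) q). { rewrite <- rpow_mul. f_equal. field. auto.
   apply Rmult_le_pos; auto. left; apply Rinv_0_lt_compat; lra. lra. }
  assert (0 <= x/(x+y) <= 1). { split. apply Rmult_le_pos; auto. left; apply Rinv_0_lt_compat; lra.
    apply Rmult_le_reg_r with (x+y). lra. field_simplify; lra. }
  assert (0 <= y/(x+y) <= 1). { split. apply Rmult_le_pos; auto. left; apply Rinv_0_lt_compat; lra.
    apply Rmult_le_reg_r with (x+y). lra. field_simplify; lra. }
  pose proof (rpow_le_self _ q H H3). pose proof (rpow_le_self _ q H H4).
  pose proof (rpow_nonneg (x+y) q).
  assert (x/(x+y) + y/(x+y) = 1) by (field; lra).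
  rewrite Ex, Ey. nra.
Qed.

Lemma rpow_lip q x y M : 1 <= q -> 0 <= x <= M -> 0 <= y <= M ->
  Rabs (rpow x q - rpow y q) <= q * rpow M (q-1) * Rabs (x - y).
Proof.
  intros Hq Hx Hy.
  pose proof (tangent q y x Hq ltac:(lra) ltac:(lra)).
  pose proof (tangent q x y Hq ltac:(lra) ltac:(lra)).
  assert (rpow x (q-1) <= rpow M (q-1)) by (apply rpow_mono; lra).
  assert (rpow y (q-1) <= rpow M (q-1)) by (apply rpow_mono; lra).
  pose proof (rpow_nonneg x (q-1)). pose proof (rpow_nonneg y (q-1)).
  set (Rx := rpow x (q-1)) in *. set (Ry := rpow y (q-1)) in *. set (RM := rpow M (q-1)) in *.
  destruct (Rle_dec y x).
  - assert (q*Rx*(x-y) <= q*RM*(x-y)). { apply Rmult_le_compat_r. lra. apply Rmult_le_compat_l; lra. }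
    assert (0 <= q*Ry*(x-y)). { apply Rmult_le_pos; [apply Rmult_le_pos|]; lra. }
    rewrite (Rabs_right (x-y)) by lra. rewrite Rabs_right by lra. lra.
  - assert (q*Ry*(y-x) <= q*RM*(y-x)). { apply Rmult_le_compat_r. lra. apply Rmult_le_compat_l; lra. }
    assert (0 <= q*Rx*(y-x)). { apply Rmult_le_pos; [apply Rmult_le_pos|]; lra. }
    rewrite (Rabs_left1 (x-y)) by lra. rewrite Rabs_left1 by lra. lra.
Qed.

Definition lsum (l : list R) : R := fold_right Rplus 0 l.

Lemma lsum_app l1 l2 : lsum (l1 ++ l2) = lsum l1 + lsum l2.
Proof. induction l1; simpl; [ring | rewrite IHl1; ring]. Qed.

Lemma lsum_nonneg {T} (L : list T) (f : T -> R) : (forall i, 0 <= f i) -> 0 <= lsum (map f L).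
Proof. intros. induction L; simpl. lra. specialize (H a). lra. Qed.

Lemma lsum_le {T} (L : list T) (f g : T -> R) : (forall i, In i L -> f i <= g i) -> lsum (map f L) <= lsum (map g L).
Proof. intros. induction L; simpl. lra. apply Rplus_le_compat. apply H; simpl; auto. apply IHL. intros; apply H; simpl; auto. Qed.

Lemma lsum_scal {T} (L : list T) (f : T -> R) c : lsum (map (fun i => c * f i) L) = c * lsum (map f L).
Proof. induction L; simpl. ring. rewrite IHL. ring. Qed.

Lemma lsum_plus {T} (L : list T) (f g : T -> R) : lsum (map (fun i => f i + g i) L) = lsum (map f L) + lsum (map g L).
Proof. induction L; simpl. ring. rewrite IHL. ring. Qed.

Lemma lsum_superadd {T} q (L : list T) (f : T -> R) : 1 <= q -> (forall i, 0 <= f i) ->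
  lsum (map (fun i => rpow (f i) q) L) <= rpow (lsum (map f L)) q.
Proof. intros. induction L; simpl. rewrite rpow_0; lra.
  eapply Rle_trans. 2: apply rpow_superadd; auto. 2: apply lsum_nonneg; auto. lra. Qed.

Lemma lsum_zero {T} (L : list T) (f : T -> R) : (forall i, 0 <= f i) -> lsum (map f L) <= 0 -> forall i, In i L -> f i = 0.
Proof. intros. induction L; simpl in *. contradiction.
  pose proof (lsum_nonneg L f H). pose proof (H a). destruct H1. subst; lra. apply IHL; auto. lra. Qed.

Lemma rpow_zero_inv x q : 0 <= x -> rpow x q <= 0 -> x = 0.
Proof. intros. destruct (Req_dec x 0); auto. pose proof (rpow_pos' x q). lra. Qed.

Lemma rpow_div a U q : 0 <= a -> 0 < U -> rpow (a/U) q = rpow a q / rpow U q.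
Proof. intros. assert (0 < rpow U q) by (apply rpow_pos'; auto).
  assert (rpow a q = rpow (a/U) q * rpow U q). { rewrite <- rpow_mul. f_equal. field; lra.
   apply Rmult_le_pos; auto; left; apply Rinv_0_lt_compat; lra. lra. }
  rewrite H2. field. lra. Qed.

Lemma minkowski {T} q (L : list T) (al be : T -> R) U V : 1 <= q ->
  (forall i, In i L -> 0 <= al i) -> (forall i, In i L -> 0 <= be i) -> 0 <= U -> 0 <= V ->
  lsum (map (fun i => rpow (al i) q) L) <= rpow U q ->
  lsum (map (fun i => rpow (be i) q) L) <= rpow V q ->
  lsum (map (fun i => rpow (al i + be i) q) L) <= rpow (U+V) q.
Proof.
  intros Hq Ha Hb HU HV H1 H2.
  destruct (Req_dec U 0). { subst. rewrite rpow_0 in H1.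
    assert (forall i, In i L -> al i = 0). { intros. apply rpow_zero_inv with q; auto.
      rewrite <- (lsum_zero L (fun i => rpow (al i) q) (fun i => rpow_nonneg _ _) H1 i H). lra. }
    rewrite Rplus_0_l. eapply Rle_trans. 2: apply H2. apply lsum_le. intros. rewrite H; auto. rewrite Rplus_0_l; lra. }
  destruct (Req_dec V 0). { subst. rewrite rpow_0 in H2.
    assert (forall i, In i L -> be i = 0). { intros. apply rpow_zero_inv with q; auto.
      rewrite <- (lsum_zero L (fun i => rpow (be i) q) (fun i => rpow_nonneg _ _) H2 i H0). lra. }
    rewrite Rplus_0_r. eapply Rle_trans. 2: apply H1. apply lsum_le. intros. rewrite H0; auto. rewrite Rplus_0_r; lra. }
  set (lam := U/(U+V)).
  assert (Hl : 0 <= lam <= 1). { unfold lam. split. apply Rmult_le_pos; [lra|left; apply Rinv_0_lt_compat; lra].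
    apply Rmult_le_reg_r with (U+V). lra. field_simplify; lra. }
  assert (HU' : 0 < rpow U q) by (apply rpow_pos'; lra).
  assert (HV' : 0 < rpow V q) by (apply rpow_pos'; lra).
  assert (Hpt : forall i, In i L -> rpow (al i + be i) q <= rpow (U+V) q * (lam * (rpow (al i) q / rpow U q) + (1-lam) * (rpow (be i) q / rpow V q))).
  { intros i Hi. specialize (Ha i Hi). specialize (Hb i Hi). replace (al i + be i) with ((U+V) * (lam * (al i / U) + (1-lam) * (be i / V))) by (unfold lam; field; lra).
    rewrite rpow_mul by (try lra; apply Rplus_le_le_0_compat; apply Rmult_le_pos; try lra; apply Rmult_le_pos; auto; left; apply Rinv_0_lt_compat; lra).
    apply Rmult_le_compat_l. apply rpow_nonneg.
    rewrite <- !rpow_div by (auto; lra).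
    apply rpow_convex; auto; apply Rmult_le_pos; auto; left; apply Rinv_0_lt_compat; lra. }
  eapply Rle_trans. apply lsum_le. intros; apply Hpt; auto.
  rewrite lsum_scal, lsum_plus, !lsum_scal.
  unfold Rdiv. 
  replace (lsum (map (fun i => rpow (al i) q * / rpow U q) L)) with (/ rpow U q * lsum (map (fun i => rpow (al i) q) L))
   by (rewrite <- lsum_scal; f_equal; apply map_ext; intros; ring).
  replace (lsum (map (fun i => rpow (be i) q * / rpow V q) L)) with (/ rpow V q * lsum (map (fun i => rpow (be i) q) L))
   by (rewrite <- lsum_scal; f_equal; apply map_ext; intros; ring).
  assert (/ rpow U q * lsum (map (fun i => rpow (al i) q) L) <= 1).
  { apply Rmult_le_reg_l with (rpow U q). lra. field_simplify; lra. }
  assert (/ rpow V q * lsum (map (fun i => rpow (be i) q) L) <= 1).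
  { apply Rmult_le_reg_l with (rpow V q). lra. field_simplify; lra. }
  pose proof (rpow_nonneg (U+V) q).
  assert (lam * (/ rpow U q * lsum (map (fun i => rpow (al i) q) L)) + (1-lam) * (/ rpow V q * lsum (map (fun i => rpow (be i) q) L)) <= 1) by nra.
  nra.
Qed.

Lemma zeta_step th k : 1 < th -> (1 <= k)%nat ->
  rpow (INR (S k)) (-th) <= (rpow (INR k) (1-th) - rpow (INR (S k)) (1-th)) / (th - 1).
Proof.
  intros Hth Hk. assert (Hk' : 1 <= INR k) by (apply (le_INR 1); auto).
  rewrite S_INR. set (K := INR k) in *.
  pose proof (bernoulli (K/(K+1)) (1-th) ltac:(apply Rdiv_lt_0_compat; lra) ltac:(right; lra)) as B.
  rewrite rpow_div in B by lra.
  assert (HK1 : 0 < rpow (K+1) (1-th)) by (apply rpow_pos'; lra).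
  assert (E : rpow (K+1) (-th) = rpow (K+1) (1-th) / (K+1)).
  { replace (1-th) with (1 + -th) by ring. rewrite rpow_plus by lra. rewrite rpow_1 by lra. field. lra. }
  rewrite E. apply Rmult_le_reg_r with ((th-1)*(K+1)). nra.
  apply Rmult_le_compat_r with (r := rpow (K+1) (1-th)) in B; [|lra].
  replace (rpow K (1 - th) / rpow (K + 1) (1 - th) * rpow (K + 1) (1 - th)) with (rpow K (1-th)) in B by (field; lra).
  replace ((1 + (1 - th) * (K / (K + 1) - 1)) * rpow (K + 1) (1 - th)) with (rpow (K+1) (1-th) + (th-1) * (rpow (K+1) (1-th) / (K+1))) in B by (field; lra).
  replace (rpow (K + 1) (1 - th) / (K + 1) * ((th - 1) * (K + 1))) with ((th-1) * rpow (K+1) (1-th)) by (field; lra).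
  replace ((rpow K (1 - th) - rpow (K + 1) (1 - th)) / (th - 1) * ((th - 1) * (K + 1))) with ((rpow K (1 - th) - rpow (K + 1) (1 - th))*(K+1)) by (field; lra).
  assert ((th-1) * (rpow (K+1) (1-th) / (K+1)) <= rpow K (1-th) - rpow (K+1) (1-th)) by lra.
  replace ((th-1) * rpow (K+1) (1-th)) with ((th-1) * (rpow (K+1) (1-th) / (K+1)) * (K+1)) by (field; lra).
  apply Rmult_le_compat_r; lra.
Qed.

Definition zsum (th : R) (N : nat) : R := sumR N (fun k => rpow (INR (S k)) (-th)).

Lemma zsum_bound th N : 1 < th -> zsum th N <= 1 + 1/(th-1).
Proof.
  intros Hth.
  assert (forall N, (1 <= N)%nat -> zsum th N <= 1 + (1 - rpow (INR N) (1-th))/(th-1)).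
  { induction N0; intros. lia. destruct N0.
    - unfold zsum; simpl. rewrite Rplus_0_l. replace (1 - rpow 1 (1-th)) with 0 by (rewrite rpow_one; ring).
      rewrite rpow_one. unfold Rdiv; lra.
    - unfold zsum in *. simpl sumR. specialize (IHN0 ltac:(lia)).
      pose proof (zeta_step th (S N0) Hth ltac:(lia)).
      change (sumR (S N0) (fun k => rpow (INR (S k)) (- th)) + rpow (INR (S (S N0))) (- th) <= 1 + (1 - rpow (INR (S (S N0))) (1 - th)) / (th - 1)).
      unfold Rdiv in *. lra. }
  destruct N. unfold zsum; simpl. assert (0 < 1/(th-1)) by (apply Rdiv_lt_0_compat; lra). lra.
  eapply Rle_trans. apply H; lia. pose proof (rpow_nonneg (INR (S N)) (1-th)).
  assert (0 < /(th-1)) by (apply Rinv_0_lt_compat; lra). unfold Rdiv. nra.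
Qed.

Lemma Kp_bound p : 1 < p < 2 -> 0 < Kp p /\ 1/(2/p - 1) <= Kp p.
Proof.
  intros Hp. unfold Kp. set (th := 2/p).
  assert (Hth : 1 < th). { unfold th. apply Rmult_lt_reg_r with p. lra. field_simplify; lra. }
  assert (Hl2 : ln 2 < 1). { rewrite <- ln_exp with 1. apply ln_increasing. lra. pose proof (exp_ineq1 1). lra. }
  assert (Hl2' : 0 < ln 2). { rewrite <- ln_1. apply ln_increasing; lra. }
  assert (E: Rpower 2 (1 - th) = exp ((1-th) * ln 2)) by reflexivity.
  pose proof (exp_ineq1_le ((1-th)*ln 2)).
  assert (0 < (th-1)*ln 2) by (apply Rmult_lt_0_compat; lra).
  assert (exp ((1-th)*ln 2) < 1). { assert (Hn : (1-th)*ln 2 < 0) by (replace ((1-th)*ln 2) with (-((th-1)*ln 2)) by ring; lra). pose proof (exp_increasing _ _ Hn). rewrite exp_0 in *. lra. }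
  assert (0 < 1 - Rpower 2 (1-th)) by lra.
  assert (0 <= (th-1)*(1-ln 2)) by (apply Rmult_le_pos; lra).
  assert (1 - Rpower 2 (1-th) <= th - 1) by (rewrite E; lra).
  split. apply Rinv_0_lt_compat; auto.
  unfold Rdiv. rewrite Rmult_1_l. apply Rinv_le_contravar; lra.
Qed.

Lemma Rsup_spec E : bound E -> (exists x, E x) -> is_lub E (Rsup E).
Proof. intros. unfold Rsup. destruct excluded_middle_informative as [h|h].
  destruct (completeness E (proj1 h) (proj2 h)); simpl; auto. exfalso; tauto. Qed.

Lemma Rsup_ub E x : bound E -> E x -> x <= Rsup E.
Proof. intros. destruct (Rsup_spec E H (ex_intro _ x H0)). apply H1; auto. Qed.

Lemma Rsup_le E M : (exists x, E x) -> (forall x, E x -> x <= M) -> Rsup E <= M.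
Proof. intros. assert (bound E) by (exists M; intros z Hz; auto).
  destruct (Rsup_spec E H1 H). apply H3. intros z Hz; auto. Qed.

Lemma Rsup_approx E eps : bound E -> (exists x, E x) -> 0 < eps -> exists x, E x /\ Rsup E - eps < x.
Proof. intros. destruct (Rsup_spec E H H0).
  apply NNPP. intro C. assert (Rsup E <= Rsup E - eps). apply H3. intros z Hz.
  destruct (Rle_dec z (Rsup E - eps)); auto. exfalso; apply C. exists z; split; auto; lra. lra. Qed.

Lemma sumR_ext n f g : (forall i, (i < n)%nat -> f i = g i) -> sumR n f = sumR n g.
Proof. induction n; simpl; intros; auto. rewrite IHn by (intros; apply H; lia). rewrite H by lia. auto. Qed.

Lemma sumR_plus n f g : sumR n (fun i => f i + g i) = sumR n f + sumR n g.
Proof. induction n; simpl. ring. rewrite IHn. ring. Qed.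

Lemma sumR_minus n f g : sumR n (fun i => f i - g i) = sumR n f - sumR n g.
Proof. induction n; simpl. ring. rewrite IHn. ring. Qed.

Lemma sumR_scal n f c : sumR n (fun i => c * f i) = c * sumR n f.
Proof. induction n; simpl. ring. rewrite IHn. ring. Qed.

Lemma sumR_nonneg n f : (forall i, (i < n)%nat -> 0 <= f i) -> 0 <= sumR n f.
Proof. induction n; simpl; intros. lra. apply Rplus_le_le_0_compat. apply IHn; intros; apply H; lia. apply H; lia. Qed.

Lemma sumR_le n f g : (forall i, (i < n)%nat -> f i <= g i) -> sumR n f <= sumR n g.
Proof. induction n; simpl; intros. lra. apply Rplus_le_compat. apply IHn; intros; apply H; lia. apply H; lia. Qed.

Lemma sumR_abs n f : Rabs (sumR n f) <= sumR n (fun i => Rabs (f i)).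
Proof. induction n; simpl. rewrite Rabs_R0; lra. eapply Rle_trans. apply Rabs_triang. lra. Qed.

Lemma cauchy_schwarz n a b : (sumR n (fun i => a i * b i))^2 <= sumR n (fun i => a i ^ 2) * sumR n (fun i => b i ^ 2).
Proof.
  induction n. simpl; lra. cbn [sumR].
  set (S := sumR n (fun i => a i * b i)) in *. set (A := sumR n (fun i => a i ^ 2)) in *. set (B := sumR n (fun i => b i ^ 2)) in *.
  assert (HA : 0 <= A) by (apply sumR_nonneg; intros; nra). assert (HB : 0 <= B) by (apply sumR_nonneg; intros; nra).
  assert (Hab : Rabs S <= sqrt A * sqrt B).
  { rewrite <- sqrt_mult by auto. rewrite <- sqrt_Rsqr_abs. apply sqrt_le_1_alt. unfold Rsqr. lra. }
  assert (2 * (sqrt A * Rabs (b n)) * (sqrt B * Rabs (a n)) <= (sqrt A * Rabs (b n))^2 + (sqrt B * Rabs (a n))^2) by (pose proof (pow2_ge_0 (sqrt A * Rabs (b n) - sqrt B * Rabs (a n))); nra).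
  assert ((sqrt A * Rabs (b n))^2 = A * b n ^2). { rewrite Rpow_mult_distr. rewrite pow2_sqrt by auto. rewrite pow2_abs. auto. }
  assert ((sqrt B * Rabs (a n))^2 = B * a n ^2). { rewrite Rpow_mult_distr. rewrite pow2_sqrt by auto. rewrite pow2_abs. auto. }
  assert (S * (a n * b n) <= Rabs S * (Rabs (a n) * Rabs (b n))). { rewrite <- Rabs_mult. rewrite <- Rabs_mult. apply Rle_abs. }
  assert (Rabs S * (Rabs (a n) * Rabs (b n)) <= sqrt A * sqrt B * (Rabs (a n) * Rabs (b n))).
  { apply Rmult_le_compat_r. apply Rmult_le_pos; apply Rabs_pos. auto. }
  assert (E1 : 2 * (sqrt A * Rabs (b n)) * (sqrt B * Rabs (a n)) = 2 * (sqrt A * sqrt B * (Rabs (a n) * Rabs (b n)))) by ring.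
  replace ((S + a n * b n)^2) with (S^2 + 2 * (S * (a n * b n)) + a n^2 * b n^2) by ring.
  replace ((A + a n ^ 2) * (B + b n ^ 2)) with (A * B + A * b n ^2 + B * a n ^2 + a n^2 * b n^2) by ring.
  lra.
Qed.

Lemma vnorm_nonneg n v : 0 <= vnorm n v.
Proof. apply sqrt_pos. Qed.

Lemma vnorm_ext n u v : (forall i, (i < n)%nat -> u i = v i) -> vnorm n u = vnorm n v.
Proof. intros. unfold vnorm. f_equal. apply sumR_ext. intros. rewrite H; auto. Qed.

Lemma vnorm_sq n v : vnorm n v ^ 2 = sumR n (fun i => v i ^ 2).
Proof. unfold vnorm. rewrite pow2_sqrt; auto. apply sumR_nonneg; intros; nra. Qed.

Lemma vnorm_triangle n u v : vnorm n (vadd u v) <= vnorm n u + vnorm n v.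
Proof.
  pose proof (vnorm_nonneg n u). pose proof (vnorm_nonneg n v).
  apply Rsqr_incr_0_var. 2: lra. unfold Rsqr.
  replace (vnorm n (vadd u v) * vnorm n (vadd u v)) with (vnorm n (vadd u v) ^2) by ring.
  rewrite vnorm_sq. unfold vadd.
  replace (sumR n (fun i => (u i + v i) ^ 2)) with (sumR n (fun i => u i ^2) + sumR n (fun i => v i ^ 2) + 2 * sumR n (fun i => u i * v i)).
  2: { rewrite <- sumR_scal, <- !sumR_plus. apply sumR_ext; intros; ring. }
  rewrite <- !vnorm_sq.
  pose proof (cauchy_schwarz n u v). rewrite <- !vnorm_sq in H1.
  assert (sumR n (fun i => u i * v i) <= vnorm n u * vnorm n v).
  { apply Rsqr_incr_0_var. 2: nra. unfold Rsqr.
    destruct (Rle_dec 0 (sumR n (fun i => u i * v i))). nra. nra. }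
  nra.
Qed.

Lemma vnorm_scal n v c : vnorm n (fun i => c * v i) = Rabs c * vnorm n v.
Proof. unfold vnorm. rewrite <- (sqrt_Rsqr (Rabs c)) by apply Rabs_pos. rewrite <- sqrt_mult.
  f_equal. rewrite <- sumR_scal. apply sumR_ext; intros. rewrite <- Rsqr_abs. unfold Rsqr. ring.
  apply Rle_0_sqr. apply sumR_nonneg; intros; nra. Qed.

Lemma vnorm_vsub_sym n u v : vnorm n (vsub u v) = vnorm n (vsub v u).
Proof. replace (vsub u v) with (fun i => (-1) * vsub v u i). rewrite vnorm_scal. replace (Rabs (-1)) with 1 by (rewrite Rabs_left; lra). ring.
  apply functional_extensionality; intros; unfold vsub; ring. Qed.

Lemma vnorm_zero_pt n v : vnorm n v = 0 -> forall i, (i < n)%nat -> v i = 0.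
Proof. intros. assert (sumR n (fun i => v i ^ 2) = 0). { rewrite <- vnorm_sq, H. ring. }
  clear H. induction n. lia. cbn [sumR] in H1.
  assert (0 <= sumR n (fun i => v i ^ 2)) by (apply sumR_nonneg; intros; nra).
  assert (0 <= v n ^ 2) by nra.
  destruct (Nat.eq_dec i n). subst. nra. apply IHn. lia. lra. Qed.

Definition fro (r c : nat) (M : mat) : R := sqrt (sumR r (fun i => sumR c (fun j => M i j ^ 2))).

Lemma mvmul_bound r c M v : vnorm r (mvmul c M v) <= fro r c M * vnorm c v.
Proof.
  unfold fro. rewrite <- (sqrt_pow2 (vnorm c v)) by apply vnorm_nonneg. rewrite <- sqrt_mult.
  2: apply sumR_nonneg; intros; apply sumR_nonneg; intros; nra. 2: nra.
  unfold vnorm at 1. apply sqrt_le_1_alt. rewrite vnorm_sq. rewrite Rmult_comm, <- sumR_scal. apply sumR_le. intros.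
  unfold mvmul. rewrite Rmult_comm. apply cauchy_schwarz.
Qed.

Lemma opnorm_set_bound r c M : bound (fun s => exists v, vnorm c v <= 1 /\ s = vnorm r (mvmul c M v)).
Proof. exists (fro r c M). intros s [v [H1 H2]]. subst. eapply Rle_trans. apply mvmul_bound.
  assert (0 <= fro r c M) by apply sqrt_pos. pose proof (vnorm_nonneg c v). nra. Qed.

Lemma vnorm_vzero n : vnorm n vzero = 0.
Proof. unfold vnorm, vzero. replace (sumR n (fun _ => 0 ^ 2)) with 0. apply sqrt_0.
  induction n. auto. cbn [sumR]. rewrite <- IHn. ring. Qed.

Lemma opnorm_nonneg r c M : 0 <= opnorm r c M.
Proof. unfold opnorm. eapply Rle_trans. 2: apply Rsup_ub. 2: apply opnorm_set_bound.
  2: exists vzero; split; [rewrite vnorm_vzero; lra| reflexivity]. apply vnorm_nonneg. Qed.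

Lemma opnorm_spec r c M v : vnorm r (mvmul c M v) <= opnorm r c M * vnorm c v.
Proof.
  destruct (Req_dec (vnorm c v) 0).
  - rewrite H, Rmult_0_r. pose proof (mvmul_bound r c M v). rewrite H, Rmult_0_r in H0. pose proof (vnorm_nonneg r (mvmul c M v)). lra.
  - assert (Hp : 0 < vnorm c v) by (pose proof (vnorm_nonneg c v); lra).
    set (w := fun j => / vnorm c v * v j).
    assert (Hw : vnorm c w = 1). { unfold w. rewrite vnorm_scal. rewrite Rabs_right. field. lra. left; apply Rinv_0_lt_compat; lra. }
    assert (Hmw : mvmul c M w = fun i => / vnorm c v * mvmul c M v i).
    { apply functional_extensionality; intros. unfold mvmul, w. rewrite <- sumR_scal. apply sumR_ext; intros; ring. }
    assert (vnorm r (mvmul c M w) <= opnorm r c M). { unfold opnorm. apply Rsup_ub. apply opnorm_set_bound. exists w. split; auto; lra. }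
    rewrite Hmw, vnorm_scal, Rabs_right in H0 by (left; apply Rinv_0_lt_compat; lra).
    apply Rmult_le_reg_l with (/ vnorm c v). apply Rinv_0_lt_compat; lra. replace (/ vnorm c v * (opnorm r c M * vnorm c v)) with (opnorm r c M) by (field; lra). lra.
Qed.

Lemma mvmul_vsub c M u v : mvmul c M (vsub u v) = vsub (mvmul c M u) (mvmul c M v).
Proof. apply functional_extensionality; intros. unfold mvmul, vsub. rewrite <- sumR_minus. apply sumR_ext; intros; ring. Qed.

Lemma mvmul_msub c M N v : mvmul c (msub M N) v = vsub (mvmul c M v) (mvmul c N v).
Proof. apply functional_extensionality; intros. unfold mvmul, vsub, msub. rewrite <- sumR_minus. apply sumR_ext; intros; ring. Qed.

Lemma vnorm_sub_triangle n u v w : vnorm n (vsub u w) <= vnorm n (vsub u v) + vnorm n (vsub v w).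
Proof. replace (vsub u w) with (vadd (vsub u v) (vsub v w)). apply vnorm_triangle.
  apply functional_extensionality; intros; unfold vadd, vsub; ring. Qed.

Lemma vnorm_add_le n u v : vnorm n u <= vnorm n v + vnorm n (vsub u v).
Proof. replace u with (vadd v (vsub u v)) at 1. apply vnorm_triangle.
  apply functional_extensionality; intros; unfold vadd, vsub; ring. Qed.

Definition om r p (z : R -> vec) s t := Rsup (psums r p z s t).

Lemma last_indep {T} (l : list T) : forall a y1 y2, last (a::l) y1 = last (a::l) y2.
Proof. induction l; intros; auto. change (last (a :: l) y1 = last (a::l) y2). auto. Qed.

Lemma last_cons {T} (x0 x : T) l : last (x :: l) x0 = last l x.
Proof. destruct l; auto. change (last (t::l) x0 = last (t::l) x). apply last_indep. Qed.

Lemma chain_app t0 l1 l2 : chain_lt t0 l1 -> chain_lt (last l1 t0) l2 -> chain_lt t0 (l1 ++ l2).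
Proof. revert t0; induction l1; simpl; intros; auto. destruct H; split; auto.
  apply IHl1; auto. destruct l1; auto. rewrite !last_cons in *; auto. Qed.

Lemma last_app {T} (l1 l2 : list T) t0 : last (l1 ++ l2) t0 = last l2 (last l1 t0).
Proof. revert t0; induction l1; intros; auto. rewrite <- app_comm_cons, !last_cons. apply IHl1. Qed.


Lemma part_app s u t l1 l2 : is_partition s u l1 -> is_partition u t l2 -> is_partition s t (l1 ++ l2).
Proof. intros [H1 H2] [H3 H4]. split. apply chain_app; auto. rewrite H2; auto. rewrite last_app, H2; auto. Qed.

Lemma chain_last t0 l : chain_lt t0 l -> l <> nil -> t0 < last l t0.
Proof. revert t0; induction l; intros t0 H Hn. congruence. destruct H. rewrite last_cons. destruct l. simpl; auto.
  eapply Rlt_trans; [eauto|]. apply IHl; auto; congruence. Qed.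

Lemma chain_le_last t0 l : chain_lt t0 l -> t0 <= last l t0.
Proof. intros. destruct l. simpl; lra. left; apply chain_last; auto; congruence. Qed.

Lemma part_nil s l : is_partition s s l -> l = nil.
Proof. intros [H1 H2]. destruct l; auto. pose proof (chain_last s (r::l) H1 ltac:(congruence)). lra. Qed.

Lemma part_le s t l : is_partition s t l -> s <= t.
Proof. intros [H1 H2]. rewrite <- H2. apply chain_le_last; auto. Qed.

Lemma part_single s t : s < t -> is_partition s t (t :: nil).
Proof. intros. split; simpl; auto. Qed.

Lemma part_cons s t1 t l : is_partition s t (t1 :: l) -> s < t1 /\ is_partition t1 t l.
Proof. intros [H1 H2]. simpl in H1. destruct H1. split; auto. split; auto. rewrite last_cons in H2; auto. Qed.

Lemma part_cons' s t1 t l : s < t1 -> is_partition t1 t l -> is_partition s t (t1 :: l).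
Proof. intros H [H1 H2]. split. simpl; auto. rewrite last_cons; auto. Qed.

Lemma psum_nonneg r p z t0 l : 0 <= psum r p z t0 l.
Proof. revert t0; induction l; simpl; intros. lra. pose proof (rpow_nonneg (vnorm r (vsub (z a) (z t0))) p). specialize (IHl a). lra. Qed.

Lemma psum_app r p z t0 l1 l2 : psum r p z t0 (l1 ++ l2) = psum r p z t0 l1 + psum r p z (last l1 t0) l2.
Proof. revert t0; induction l1; intros. simpl; ring. rewrite <- app_comm_cons, last_cons. simpl. rewrite IHl1. ring. Qed.

Lemma psums_ne r p z s t : s <= t -> exists v, psums r p z s t v.
Proof. intros. destruct H. exists (psum r p z s (t::nil)). exists (t::nil); split; auto. apply part_single; auto.
  subst. exists 0. exists nil. split; auto. split; simpl; auto. Qed.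

Lemma psums_sub r p z a b s t : a <= s -> s <= t -> t <= b -> bound (psums r p z a b) -> bound (psums r p z s t).
Proof.
  intros Has Hst Htb [M HM]. exists M. intros v [l [Hl Hv]]. subst v.
  set (l1 := if Rlt_dec a s then s :: nil else nil).
  set (l3 := if Rlt_dec t b then b :: nil else nil).
  assert (P1 : is_partition a s l1). { unfold l1; destruct (Rlt_dec a s). apply part_single; auto. assert (a = s) by lra. subst; split; simpl; auto. }
  assert (P3 : is_partition t b l3). { unfold l3; destruct (Rlt_dec t b). apply part_single; auto. assert (t = b) by lra. subst; split; simpl; auto. }
  assert (P : is_partition a b (l1 ++ l ++ l3)) by (eapply part_app; eauto; eapply part_app; eauto).
  specialize (HM _ (ex_intro _ _ (conj P eq_refl))).
  rewrite !psum_app in HM. destruct P1 as [_ E1]. rewrite E1 in HM. destruct Hl as [_ E2]. rewrite E2 in HM.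
  pose proof (psum_nonneg r p z a l1). pose proof (psum_nonneg r p z t l3). lra.
Qed.

Lemma om_ub r p z s t l : bound (psums r p z s t) -> is_partition s t l -> psum r p z s l <= om r p z s t.
Proof. intros. apply Rsup_ub; auto. exists l; auto. Qed.

Lemma om_nonneg r p z s t : s <= t -> bound (psums r p z s t) -> 0 <= om r p z s t.
Proof. intros. destruct (psums_ne r p z s t H) as [v [l [Hl Hv]]]. eapply Rle_trans. 2: eapply om_ub; eauto. apply psum_nonneg. Qed.

Lemma om_self r p z s : om r p z s s = 0.
Proof. unfold om. apply Rle_antisym. apply Rsup_le. apply psums_ne; lra.
  intros v [l [Hl Hv]]. apply part_nil in Hl. subst. simpl; lra.
  apply Rsup_ub. exists 0. intros v [l [Hl Hv]]. apply part_nil in Hl. subst. simpl; lra.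
  exists nil. split; auto. split; simpl; auto. Qed.

Lemma om_le r p z s t M : s <= t -> (forall l, is_partition s t l -> psum r p z s l <= M) -> om r p z s t <= M.
Proof. intros. apply Rsup_le. apply psums_ne; auto. intros v [l [Hl Hv]]. subst; auto. Qed.

Lemma le_eps x y : (forall eps, 0 < eps -> x <= y + eps) -> x <= y.
Proof. intros. destruct (Rle_dec x y); auto. specialize (H ((x-y)/2) ltac:(lra)). lra. Qed.

Lemma om_superadd r p z a b s u t : a <= s -> s <= u -> u <= t -> t <= b -> bound (psums r p z a b) ->
  om r p z s u + om r p z u t <= om r p z s t.
Proof.
  intros H H0 H1 H2 H3. apply le_eps. intros eps He.
  destruct (Rsup_approx (psums r p z s u) (eps/2)) as [v1 [[l1 [P1 E1]] H4]]; auto. apply (psums_sub r p z a b); auto; lra. apply psums_ne; auto. lra.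
  destruct (Rsup_approx (psums r p z u t) (eps/2)) as [v2 [[l2 [P2 E2]] H5]]; auto. apply (psums_sub r p z a b); auto; lra. apply psums_ne; auto. lra.
  subst. assert (P := part_app _ _ _ _ _ P1 P2).
  pose proof (om_ub r p z s t _ ltac:(apply (psums_sub r p z a b); auto; lra) P). rewrite psum_app in H6.
  destruct P1 as [_ E]. rewrite E in H6. unfold om in *. lra.
Qed.

Lemma om_step r p z s t : s <= t -> bound (psums r p z s t) -> rpow (vnorm r (vsub (z t) (z s))) p <= om r p z s t.
Proof. intros. destruct H. pose proof (om_ub r p z s t _ H0 (part_single s t H)). simpl in H1. lra.
  subst. rewrite om_self. replace (vsub (z t) (z t)) with vzero. rewrite vnorm_vzero, rpow_0. lra.
  apply functional_extensionality; intros; unfold vsub, vzero; ring. Qed.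

Lemma vsub_self_norm r v : vnorm r (vsub v v) = 0.
Proof. replace (vsub v v) with vzero. apply vnorm_vzero. apply functional_extensionality; intros; unfold vsub, vzero; ring. Qed.

Lemma split_psum r p z a b : 1 <= p -> bound (psums r p z a b) ->
  forall l t0 e u, a <= t0 -> e <= b -> is_partition t0 e l -> t0 <= u <= e ->
  exists A al B be r', 0 <= A /\ 0 <= al /\ 0 <= B /\ 0 <= be /\
    A + rpow al p <= om r p z t0 u /\ B + rpow be p <= om r p z u e /\
    psum r p z t0 l <= A + rpow (al + be) p + B /\ u <= r' <= e /\ be = vnorm r (vsub (z r') (z u)).
Proof.
  intros Hp Hbd. induction l; intros t0 e u Ht0 He Hl Hu.
  - destruct Hl as [_ Hl]. simpl in Hl. subst e. assert (u = t0) by lra. subst u.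
    exists 0, 0, 0, 0, t0. rewrite om_self, vsub_self_norm, !Rplus_0_r, rpow_0. simpl. repeat split; lra.
  - destruct (part_cons _ _ _ _ Hl) as [H01 Hl'].
    pose proof (part_le _ _ _ Hl') as H1e.
    destruct (Rle_dec a0 u) as [Hau|Hau].
    + destruct (IHl a0 e u ltac:(lra) He Hl' ltac:(lra)) as [A [al [B [be [r' [HA [Hal [HB [Hbe [H1 [H2 [H3 [H4 H5]]]]]]]]]]]]].
      exists (rpow (vnorm r (vsub (z a0) (z t0))) p + A), al, B, be, r'.
      pose proof (rpow_nonneg (vnorm r (vsub (z a0) (z t0))) p).
      pose proof (om_step r p z t0 a0 ltac:(lra) ltac:(apply (psums_sub r p z a b); auto; lra)).
      pose proof (om_superadd r p z a b t0 a0 u ltac:(lra) ltac:(lra) ltac:(lra) ltac:(lra) Hbd).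
      repeat split; auto; try lra. simpl. lra.
    + exists 0, (vnorm r (vsub (z u) (z t0))), (psum r p z a0 l), (vnorm r (vsub (z a0) (z u))), a0.
      apply Rnot_le_lt in Hau.
      pose proof (om_step r p z t0 u ltac:(lra) ltac:(apply (psums_sub r p z a b); auto; lra)).
      pose proof (om_ub r p z u e (a0 :: l) ltac:(apply (psums_sub r p z a b); auto; lra) (part_cons' u a0 e l ltac:(lra) Hl')).
      simpl in H0.
      assert (rpow (vnorm r (vsub (z a0) (z t0))) p <= rpow (vnorm r (vsub (z u) (z t0)) + vnorm r (vsub (z a0) (z u))) p).
      { apply rpow_mono. lra. split. apply vnorm_nonneg. pose proof (vnorm_sub_triangle r (z a0) (z u) (z t0)). lra. }
      repeat split; try lra; try apply vnorm_nonneg; try apply psum_nonneg. simpl. lra.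
Qed.

Lemma pvar_om r p z s t : pvar_semi r p z s t = rpow (om r p z s t) (1/p).
Proof. reflexivity. Qed.

Lemma pvar_nonneg r p z s t : 0 <= pvar_semi r p z s t.
Proof. apply rpow_nonneg. Qed.

Lemma pvar_pow r p z a b s t : 0 < p -> a <= s -> s <= t -> t <= b -> bound (psums r p z a b) ->
  rpow (pvar_semi r p z s t) p = om r p z s t.
Proof. intros. rewrite pvar_om. apply rpow_inv'; auto. apply om_nonneg; auto. apply (psums_sub r p z a b); auto. Qed.

Lemma pvar_self r p z s : pvar_semi r p z s s = 0.
Proof. rewrite pvar_om, om_self. apply rpow_0. Qed.

Lemma pvar_le r p z s t Z : 0 < p -> s <= t -> 0 <= Z ->
  (forall l, is_partition s t l -> psum r p z s l <= rpow Z p) -> pvar_semi r p z s t <= Z.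
Proof. intros. rewrite pvar_om. rewrite <- (rpow_inv Z p) by auto. apply rpow_mono.
  left; apply Rdiv_lt_0_compat; lra. split. destruct (psums_ne r p z s t H0) as [v [l [Hl Hv]]].
  apply Rle_trans with (psum r p z s l). apply psum_nonneg. apply Rsup_ub. exists (rpow Z p). intros w [l' [Hl' Hw]]. subst; auto. exists l; auto.
  apply om_le; auto. Qed.

Lemma pvar_step r p z a b s t : 0 < p -> a <= s -> s <= t -> t <= b -> bound (psums r p z a b) ->
  vnorm r (vsub (z t) (z s)) <= pvar_semi r p z s t.
Proof. intros. rewrite pvar_om. rewrite <- (rpow_inv (vnorm r (vsub (z t) (z s))) p) by (auto; apply vnorm_nonneg).
  apply rpow_mono. left; apply Rdiv_lt_0_compat; lra. split. apply rpow_nonneg.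
  apply om_step; auto. apply (psums_sub r p z a b); auto. Qed.

Lemma pvar_mono r p z a b s u t v : 0 < p -> a <= s -> s <= u -> u <= v -> v <= t -> t <= b -> bound (psums r p z a b) ->
  pvar_semi r p z u v <= pvar_semi r p z s t.
Proof. intros. rewrite !pvar_om. apply rpow_mono. left; apply Rdiv_lt_0_compat; lra. split.
  apply om_nonneg; auto. apply (psums_sub r p z a b); auto; lra.
  pose proof (om_superadd r p z a b s u t ltac:(lra) ltac:(lra) ltac:(lra) ltac:(lra) H5).
  pose proof (om_superadd r p z a b u v t ltac:(lra) ltac:(lra) ltac:(lra) ltac:(lra) H5).
  pose proof (om_nonneg r p z s u ltac:(lra) ltac:(apply (psums_sub r p z a b); auto; lra)).
  pose proof (om_nonneg r p z v t ltac:(lra) ltac:(apply (psums_sub r p z a b); auto; lra)).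
  lra. Qed.

Lemma pvar_subadd r p z a b s u t : 1 <= p -> a <= s -> s <= u -> u <= t -> t <= b -> bound (psums r p z a b) ->
  pvar_semi r p z s t <= pvar_semi r p z s u + pvar_semi r p z u t.
Proof.
  intros. apply pvar_le; try lra. apply Rplus_le_le_0_compat; apply pvar_nonneg.
  intros l Hl. destruct (split_psum r p z a b H H4 l s t u H0 H3 Hl ltac:(lra)) as [A [al [B [be [r' [HA [Hal [HB [Hbe [K1 [K2 [K5 _]]]]]]]]]]]].
  set (L := (rpow A (1/p), 0) :: (al, be) :: (0, rpow B (1/p)) :: nil).
  assert (Hp0 : 0 < p) by lra.
  pose proof (minkowski p L fst snd (pvar_semi r p z s u) (pvar_semi r p z u t) H) as H6.
  unfold L in H6; simpl in H6.
  assert (E1: rpow (rpow A (1/p)) p = A) by (apply rpow_inv'; auto).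
  assert (E2: rpow (rpow B (1/p)) p = B) by (apply rpow_inv'; auto).
  rewrite !rpow_0, !Rplus_0_r, !Rplus_0_l in H6.
  rewrite (pvar_pow r p z a b s u), (pvar_pow r p z a b u t) in H6 by (auto; lra).
  assert (HH : rpow (rpow A (1 / p)) p + (rpow (al + be) p + rpow (rpow B (1 / p)) p) <=
     rpow (pvar_semi r p z s u + pvar_semi r p z u t) p).
  { apply H6.
    - intros i Hi. destruct Hi as [<-|[<-|[<-|[]]]]; simpl; auto; try lra; apply rpow_nonneg.
    - intros i Hi. destruct Hi as [<-|[<-|[<-|[]]]]; simpl; auto; try lra; apply rpow_nonneg.
    - apply pvar_nonneg.
    - apply pvar_nonneg.
    - rewrite E1. lra.
    - rewrite E2. lra. }
  rewrite E1, E2 in HH. lra.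
Qed.

Definition contin r (z : R -> vec) a b := forall t, a <= t <= b -> forall eps, 0 < eps -> exists delta, 0 < delta /\
     forall s, a <= s <= b -> Rabs (s - t) < delta -> vnorm r (vsub (z s) (z t)) < eps.

Lemma vnorm_rev r u v : Rabs (vnorm r u - vnorm r v) <= vnorm r (vsub u v).
Proof. pose proof (vnorm_add_le r u v). pose proof (vnorm_add_le r v u). rewrite vnorm_vsub_sym in H0.
  unfold Rabs; destruct Rcase_abs; lra. Qed.

Lemma pw_close r p z a b u v w eta : 1 <= p -> bound (psums r p z a b) -> a <= u <= b -> a <= v <= b -> a <= w <= b ->
  vnorm r (vsub (z v) (z w)) <= eta ->
  Rabs (rpow (vnorm r (vsub (z u) (z v))) p - rpow (vnorm r (vsub (z u) (z w))) p) <= p * rpow (pvar_semi r p z a b) (p-1) * eta.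
Proof.
  intros Hp Hbd Hu Hv Hw He. set (M := pvar_semi r p z a b).
  assert (forall s t, a <= s <= b -> a <= t <= b -> vnorm r (vsub (z s) (z t)) <= M).
  { intros. destruct (Rle_dec t s). eapply Rle_trans. apply (pvar_step r p z a b t s); auto; lra. apply (pvar_mono r p z a b a t b s); auto; lra.
    rewrite vnorm_vsub_sym. eapply Rle_trans. apply (pvar_step r p z a b s t); auto; lra. apply (pvar_mono r p z a b a s b t); auto; lra. }
  eapply Rle_trans. apply rpow_lip with (M := M); auto. split; [apply vnorm_nonneg|auto]. split; [apply vnorm_nonneg|auto].
  apply Rmult_le_compat_l. apply Rmult_le_pos. lra. apply rpow_nonneg.
  eapply Rle_trans. apply vnorm_rev. replace (vsub (vsub (z u) (z v)) (vsub (z u) (z w))) with (vsub (z w) (z v)).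
  rewrite vnorm_vsub_sym; auto. apply functional_extensionality; intros; unfold vsub; ring.
Qed.

Lemma cont_close r p z a b t eps : 1 <= p -> bound (psums r p z a b) -> contin r z a b -> a <= t <= b -> 0 < eps ->
  exists delta, 0 < delta /\ forall s, a <= s <= b -> Rabs (s - t) < delta -> forall u, a <= u <= b ->
    Rabs (rpow (vnorm r (vsub (z u) (z s))) p - rpow (vnorm r (vsub (z u) (z t))) p) < eps.
Proof.
  intros Hp Hbd Hc Ht He. set (K := p * rpow (pvar_semi r p z a b) (p-1)).
  assert (HK : 0 <= K) by (apply Rmult_le_pos; [lra|apply rpow_nonneg]).
  destruct (Hc t Ht (eps / (K+1))) as [del [Hd Hdel]]. apply Rdiv_lt_0_compat; lra.
  exists del; split; auto. intros s Hs Hst u Hu.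
  eapply Rle_lt_trans. apply (pw_close r p z a b u s t (eps/(K+1))); auto. left. apply Hdel; auto.
  fold K. replace (K * (eps / (K+1))) with (eps * (K / (K+1))) by (field; lra). assert (K / (K+1) < 1) by (apply Rmult_lt_reg_r with (K+1); [lra|]; unfold Rdiv; rewrite Rmult_assoc, Rinv_l by lra; lra). nra.
Qed.

Lemma om_mono_r r p z a b s t t' : a <= s -> s <= t -> t <= t' -> t' <= b -> bound (psums r p z a b) -> om r p z s t <= om r p z s t'.
Proof. intros. pose proof (om_superadd r p z a b s t t' H H0 H1 H2 H3).
  pose proof (om_nonneg r p z t t' H1 ltac:(apply (psums_sub r p z a b); auto; lra)). lra. Qed.

Lemma om_right0 r p z a b s : 1 <= p -> bound (psums r p z a b) -> contin r z a b -> a <= s < b ->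
  forall eps, 0 < eps -> exists delta, 0 < delta /\ forall h, 0 < h < delta -> s + h <= b -> om r p z s (s+h) < eps.
Proof.
  intros Hp Hbd Hc Hs eps He. apply NNPP; intro C.
  assert (HA : forall t, s < t <= b -> eps <= om r p z s t).
  { intros t Ht. apply NNPP; intro C2. apply C. exists (t - s). split. lra. intros h Hh Hb.
    pose proof (om_mono_r r p z a b s (s+h) t ltac:(lra) ltac:(lra) ltac:(lra) ltac:(lra) Hbd). lra. }
  set (E := fun w => exists t, s < t <= b /\ w = - om r p z s t).
  assert (HEb : bound E). { exists 0. intros w [t [Ht Hw]]. subst. pose proof (HA t Ht). lra. }
  assert (HEn : exists w, E w). { exists (- om r p z s b). exists b. split; auto; lra. }
  set (Lm := - Rsup E).
  assert (HLm : eps <= Lm). { unfold Lm. assert (Rsup E <= - eps). apply Rsup_le; auto. intros w [t [Ht Hw]]. subst. pose proof (HA t Ht). lra. lra. }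
  assert (HLt : forall t, s < t <= b -> Lm <= om r p z s t).
  { intros t Ht. unfold Lm. assert (- om r p z s t <= Rsup E). apply Rsup_ub; auto. exists t; auto. lra. }
  destruct (Rsup_approx E (Lm/4) HEb HEn ltac:(lra)) as [w [[t1 [Ht1 Hw]] Hw2]]. subst w.
  fold Lm in Hw2. replace (Rsup E) with (- Lm) in Hw2 by (unfold Lm; ring).
  assert (Hbd1 : bound (psums r p z s t1)) by (apply (psums_sub r p z a b); auto; lra).
  destruct (Rsup_approx (psums r p z s t1) (Lm/4) Hbd1 (psums_ne r p z s t1 ltac:(lra)) ltac:(lra)) as [v [[l [Hl Hv]] Hv2]].
  subst v. fold (om r p z s t1) in Hv2.
  destruct l as [|c1 l']. { destruct Hl as [_ Hl]. simpl in Hl. lra. }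
  destruct (part_cons _ _ _ _ Hl) as [Hc1 Hl'].
  pose proof (part_le _ _ _ Hl') as Hc1t.
  destruct (cont_close r p z a b s (Lm/4) Hp Hbd Hc ltac:(lra) ltac:(lra)) as [del [Hdel Hcl]].
  set (s' := s + Rmin del (c1 - s) / 2).
  assert (Hs' : s < s' < c1). { unfold s'. pose proof (Rmin_l del (c1 - s)). pose proof (Rmin_r del (c1 - s)).
     assert (0 < Rmin del (c1 - s)) by (apply Rmin_pos; lra). lra. }
  assert (Hss : Rabs (s' - s) < del). { unfold s'. rewrite Rabs_right. pose proof (Rmin_l del (c1 - s)).
     assert (0 < Rmin del (c1 - s)) by (apply Rmin_pos; lra). lra. 
     assert (0 < Rmin del (c1 - s)) by (apply Rmin_pos; lra). lra. }
  specialize (Hcl s' ltac:(lra) Hss c1 ltac:(lra)).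
  assert (Hl2 : is_partition s' t1 (c1 :: l')) by (apply part_cons'; auto; lra).
  pose proof (om_ub r p z s' t1 _ ltac:(apply (psums_sub r p z a b); auto; lra) Hl2).
  simpl in H, Hv2. apply Rabs_def2 in Hcl.
  pose proof (HLt s' ltac:(lra)).
  pose proof (om_superadd r p z a b s s' t1 ltac:(lra) ltac:(lra) ltac:(lra) ltac:(lra) Hbd).
  lra.
Qed.

Lemma chain_app_inv t0 l1 l2 : chain_lt t0 (l1 ++ l2) -> chain_lt t0 l1 /\ chain_lt (last l1 t0) l2.
Proof. revert t0; induction l1; intros t0 H. simpl in *; auto.
  rewrite <- app_comm_cons in H. destruct H. destruct (IHl1 _ H0). rewrite last_cons. simpl; auto. Qed.

Lemma om_left r p z a b s t : 1 <= p -> bound (psums r p z a b) -> contin r z a b -> a <= s -> s < t -> t <= b ->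
  forall eps, 0 < eps -> exists delta, 0 < delta /\ forall t', t - delta < t' <= t -> s <= t' -> om r p z s t - eps < om r p z s t'.
Proof.
  intros Hp Hbd Hc Hs Hst Htb eps He.
  assert (Hbd1 : bound (psums r p z s t)) by (apply (psums_sub r p z a b); auto; lra).
  destruct (Rsup_approx (psums r p z s t) (eps/2) Hbd1 (psums_ne r p z s t ltac:(lra)) ltac:(lra)) as [v [[l [Hl Hv]] Hv2]].
  subst v. fold (om r p z s t) in Hv2.
  destruct l as [|c1 l']. { destruct Hl as [_ Hl]. simpl in Hl. lra. }
  destruct (exists_last (l := c1 :: l') ltac:(congruence)) as [l0 [t2 E]]. rewrite E in Hl, Hv2.
  destruct Hl as [Hch Hlast]. rewrite last_app in Hlast. simpl in Hlast. subst t2.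
  destruct (chain_app_inv _ _ _ Hch) as [Hch0 Hch1]. set (c := last l0 s) in *. simpl in Hch1. destruct Hch1 as [Hct _].
  pose proof (chain_le_last s l0 Hch0) as Hsc. fold c in Hsc.
  rewrite psum_app in Hv2. fold c in Hv2. simpl in Hv2.
  destruct (cont_close r p z a b t (eps/2) Hp Hbd Hc ltac:(lra) ltac:(lra)) as [del [Hdel Hcl]].
  exists (Rmin del (t - c)). split. apply Rmin_pos; lra. intros t' Ht' Hst'.
  pose proof (Rmin_l del (t-c)). pose proof (Rmin_r del (t-c)).
  assert (Hpart : is_partition s t' (l0 ++ t' :: nil)).
  { split. apply chain_app; auto. fold c. simpl. split; auto; lra. rewrite last_app. auto. }
  pose proof (om_ub r p z s t' _ ltac:(apply (psums_sub r p z a b); auto; lra) Hpart).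
  rewrite psum_app in H1. fold c in H1. simpl in H1.
  specialize (Hcl t' ltac:(lra) ltac:(rewrite Rabs_left1; lra) c ltac:(lra)).
  rewrite !(vnorm_vsub_sym r (z c)) in Hcl. apply Rabs_def2 in Hcl. lra.
Qed.

Lemma om_right r p z a b s t : 1 <= p -> bound (psums r p z a b) -> contin r z a b -> a <= s -> s <= t -> t < b ->
  forall eps, 0 < eps -> exists delta, 0 < delta /\ forall t', t <= t' < t + delta -> t' <= b -> om r p z s t' < om r p z s t + eps.
Proof.
  intros Hp Hbd Hc Hs Hst Htb eps He.
  set (M := pvar_semi r p z a b). set (C := p * rpow (2*M) (p-1)).
  assert (HM : 0 <= M) by apply pvar_nonneg.
  assert (HC : 0 <= C) by (apply Rmult_le_pos; [lra|apply rpow_nonneg]).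
  destruct (om_right0 r p z a b t Hp Hbd Hc ltac:(lra) (eps/2) ltac:(lra)) as [d1 [Hd1 H1]].
  destruct (Hc t ltac:(lra) (eps/(2*(C+1))) ltac:(apply Rdiv_lt_0_compat; lra)) as [d2 [Hd2 H2]].
  exists (Rmin d1 d2). split. apply Rmin_pos; lra. intros t' Ht' Htb'.
  pose proof (Rmin_l d1 d2). pose proof (Rmin_r d1 d2).
  assert (Hott : om r p z t t' < eps/2).
  { destruct (Req_dec t' t). subst. rewrite om_self. lra. replace t' with (t + (t'-t)) by ring. apply H1; try lra. }
  assert (Hle : om r p z s t' <= om r p z s t + om r p z t t' + C * (eps/(2*(C+1)))).
  { apply om_le. lra. intros l Hl.
    destruct (split_psum r p z a b Hp Hbd l s t' t Hs Htb' Hl ltac:(lra)) as [A [al [B [be [r' [HA [Hal [HB [Hbe [K1 [K2 [K3 [K4 K5]]]]]]]]]]]]].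
    assert (Hbe2 : be < eps/(2*(C+1))). { rewrite K5. apply H2. lra. rewrite Rabs_right; lra. }
    assert (Hal2 : al <= M).
    { assert (rpow al p <= om r p z s t) by (pose proof (rpow_nonneg al p); lra).
      rewrite <- (rpow_inv al p) by (auto; lra). eapply Rle_trans. apply rpow_mono. left; apply Rdiv_lt_0_compat; lra.
      split. apply rpow_nonneg. apply H3. rewrite <- pvar_om. apply (pvar_mono r p z a b a s b t); auto; lra. }
    assert (Hbe3 : be <= M). { rewrite K5. eapply Rle_trans. apply (pvar_step r p z a b t r'); auto; lra. apply (pvar_mono r p z a b a t b r'); auto; lra. }
    pose proof (tangent p al (al+be) Hp Hal ltac:(lra)).
    assert (rpow (al+be) (p-1) <= rpow (2*M) (p-1)) by (apply rpow_mono; lra).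
    assert (p * rpow (al+be) (p-1) * be <= C * be).
    { unfold C. apply Rmult_le_compat_r; auto. apply Rmult_le_compat_l; lra. }
    assert (C * be <= C * (eps/(2*(C+1)))) by (apply Rmult_le_compat_l; lra).
    assert (B <= om r p z t t') by (pose proof (rpow_nonneg be p); lra).
    assert (A + rpow al p <= om r p z s t) by auto.
    replace (al - (al + be)) with (- be) in H5 by ring. lra. }
  assert (C * (eps / (2 * (C + 1))) < eps/2).
  { replace (C * (eps / (2 * (C + 1)))) with (eps/2 * (C/(C+1))) by (field; lra).
    assert (C/(C+1) < 1) by (apply Rmult_lt_reg_r with (C+1); [lra|]; unfold Rdiv; rewrite Rmult_assoc, Rinv_l by lra; lra). nra. }
  lra.
Qed.

Lemma ivt_within (F : R -> R) s e c : s < e ->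
  (forall t, s <= t <= e -> forall eps, 0 < eps -> exists delta, 0 < delta /\
     forall t', s <= t' <= e -> Rabs (t' - t) < delta -> Rabs (F t' - F t) < eps) ->
  F s < c -> c < F e -> exists t, s < t < e /\ F t = c.
Proof.
  intros Hse Hc Hs He.
  set (cl := fun t => Rmax s (Rmin e t)).
  assert (Hcl : forall t, s <= cl t <= e). { intros; unfold cl. split. apply Rmax_l. apply Rmax_lub. lra. apply Rmin_l. }
  assert (Hcl2 : forall t t', Rabs (cl t' - cl t) <= Rabs (t' - t)).
  { intros. unfold cl, Rmax, Rmin. repeat destruct Rle_dec; unfold Rabs; repeat destruct Rcase_abs; lra. }
  assert (Hcl3 : forall t, s <= t <= e -> cl t = t). { intros. unfold cl, Rmax, Rmin. repeat destruct Rle_dec; lra. }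
  set (G := fun t => F (cl t) - c).
  assert (HG : continuity G).
  { intros t. unfold continuity_pt, continue_in, limit1_in, limit_in. intros eps Heps.
    destruct (Hc (cl t) (Hcl t) eps Heps) as [del [Hd Hdel]]. exists del. split; auto.
    intros t' [_ Ht']. simpl in *. unfold R_dist in *. unfold G.
    replace (F (cl t') - c - (F (cl t) - c)) with (F (cl t') - F (cl t)) by ring.
    apply Hdel. auto. eapply Rle_lt_trans. apply Hcl2. auto. }
  destruct (IVT G s e HG Hse) as [t [Ht Hzt]].
  unfold G. rewrite Hcl3 by lra. lra. unfold G. rewrite Hcl3 by lra. lra.
  unfold G in Hzt. rewrite Hcl3 in Hzt by lra.
  exists t. split. split. destruct (Req_dec t s). subst. lra. lra. destruct (Req_dec t e). subst. lra. lra. lra.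
Qed.

Lemma om_cont r p z a b s e : 1 <= p -> bound (psums r p z a b) -> contin r z a b -> a <= s -> s <= e -> e <= b ->
  forall t, s <= t <= e -> forall eps, 0 < eps -> exists delta, 0 < delta /\
     forall t', s <= t' <= e -> Rabs (t' - t) < delta -> Rabs (om r p z s t' - om r p z s t) < eps.
Proof.
  intros Hp Hbd Hc Hs Hse Heb t Ht eps He.
  assert (HL : exists d1, 0 < d1 /\ forall t', s <= t' <= t -> t - d1 < t' -> om r p z s t - eps < om r p z s t').
  { destruct (Req_dec t s). subst. exists 1. split. lra. intros. assert (t' = s) by lra. subst. lra.
    destruct (om_left r p z a b s t Hp Hbd Hc Hs ltac:(lra) ltac:(lra) eps He) as [d1 [Hd1 H1]].
    exists d1. split; auto. intros; apply H1; lra. }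
  assert (HR : exists d2, 0 < d2 /\ forall t', t <= t' <= e -> t' < t + d2 -> om r p z s t' < om r p z s t + eps).
  { destruct (Req_dec t b). subst. exists 1. split. lra. intros. assert (t' = b) by lra. subst. lra.
    destruct (om_right r p z a b s t Hp Hbd Hc Hs ltac:(lra) ltac:(lra) eps He) as [d2 [Hd2 H2]].
    exists d2. split; auto. intros; apply H2; lra. }
  destruct HL as [d1 [Hd1 H1]]. destruct HR as [d2 [Hd2 H2]].
  exists (Rmin d1 d2). split. apply Rmin_pos; lra. intros t' Ht' Hd.
  pose proof (Rmin_l d1 d2). pose proof (Rmin_r d1 d2).
  destruct (Rle_dec t' t).
  - rewrite Rabs_left1 in Hd by lra. specialize (H1 t' ltac:(lra) ltac:(lra)).
    pose proof (om_mono_r r p z a b s t' t ltac:(lra) ltac:(lra) ltac:(lra) ltac:(lra) Hbd).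
    rewrite Rabs_left1 by lra. lra.
  - rewrite Rabs_right in Hd by lra. specialize (H2 t' ltac:(lra) ltac:(lra)).
    pose proof (om_mono_r r p z a b s t t' ltac:(lra) ltac:(lra) ltac:(lra) ltac:(lra) Hbd).
    rewrite Rabs_right by lra. lra.
Qed.

Lemma greedy_ok r p gam z a b s : 1 < p -> 0 < gam -> bound (psums r p z a b) -> contin r z a b -> a <= s <= b ->
  s <= greedy_next r p gam z b s <= b /\ pvar_semi r p z s (greedy_next r p gam z b s) <= gam.
Proof.
  intros Hp Hg Hbd Hc Hs.
  set (E := fun t => s < t <= b /\ pvar_semi r p z s t = gam).
  assert (Key : forall ts, s <= ts <= b -> (forall t, E t -> ts <= t) -> pvar_semi r p z s ts <= gam).
  { intros ts Hts HE. apply NNPP; intro C. apply Rnot_le_lt in C.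
    assert (Hom : rpow gam p < om r p z s ts).
    { apply Rnot_le_lt. intro C2. assert (pvar_semi r p z s ts <= gam); [|lra].
      rewrite pvar_om. rewrite <- (rpow_inv gam p) by lra. apply rpow_mono. left; apply Rdiv_lt_0_compat; lra.
      split; auto. apply om_nonneg. lra. apply (psums_sub r p z a b); auto; lra. }
    assert (Hsts : s < ts). { destruct (Req_dec s ts); [|lra]. subst. rewrite pvar_self in C. lra. }
    destruct (ivt_within (om r p z s) s ts (rpow gam p) Hsts) as [t [Ht Hot]].
    - apply (om_cont r p z a b s ts); auto; lra.
    - rewrite om_self. apply rpow_pos'; auto.
    - auto.
    - assert (E t). { split. lra. rewrite pvar_om, Hot. apply rpow_inv; lra. }
      specialize (HE t H). lra. }
  unfold greedy_next. fold E. destruct (excluded_middle_informative (exists t, E t)) as [[t0 Ht0]|Hn].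
  - set (E' := fun x => E (-x)).
    assert (HE'b : bound E'). { exists (-s). intros x [Hx _]. lra. }
    assert (HE'n : exists x, E' x). { exists (-t0). unfold E'. rewrite Ropp_involutive. auto. }
    assert (Hinf1 : s <= Rinf E). { unfold Rinf. fold E'. assert (Rsup E' <= -s). apply Rsup_le; auto. intros x [Hx _]. lra. lra. }
    assert (Hinf2 : forall t, E t -> Rinf E <= t). { intros t Ht. unfold Rinf. fold E'. assert (-t <= Rsup E'). apply Rsup_ub; auto. unfold E'. rewrite Ropp_involutive; auto. lra. }
    assert (s <= Rmin (Rinf E) b <= b). { split. apply Rmin_glb; lra. apply Rmin_r. }
    split; auto. apply Key; auto. intros t Ht. eapply Rle_trans. apply Rmin_l. auto.
  - split. lra. apply Key. lra. intros t Ht. exfalso; apply Hn; eauto.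
Qed.

Lemma tau_range r p gam z a b k : 1 < p -> 0 < gam -> bound (psums r p z a b) -> contin r z a b -> a <= b ->
  a <= tau r p gam z a b k <= b.
Proof. intros. induction k. simpl; lra. simpl. pose proof (greedy_ok r p gam z a b (tau r p gam z a b k) H H0 H1 H2 IHk). lra. Qed.

Lemma tau_step r p gam z a b k : 1 < p -> 0 < gam -> bound (psums r p z a b) -> contin r z a b -> a <= b ->
  tau r p gam z a b k <= tau r p gam z a b (S k) /\ pvar_semi r p z (tau r p gam z a b k) (tau r p gam z a b (S k)) <= gam.
Proof. intros. simpl. pose proof (greedy_ok r p gam z a b (tau r p gam z a b k) H H0 H1 H2 (tau_range r p gam z a b k H H0 H1 H2 H3)). destruct H4 as [H4 H5]; split; [lra|exact H5]. Qed.

Lemma rs_sum_app c H X t0 l1 l2 : rs_sum c H X t0 (l1 ++ l2) = vadd (rs_sum c H X t0 l1) (rs_sum c H X (last l1 t0) l2).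
Proof. revert t0; induction l1; intros. simpl. apply functional_extensionality; intros; unfold vadd, vzero; ring.
  rewrite <- app_comm_cons, last_cons. simpl. rewrite IHl1. apply functional_extensionality; intros; unfold vadd; ring. Qed.

Lemma vnorm_ext' n u v : u = v -> vnorm n u = vnorm n v.
Proof. intros; subst; auto. Qed.

Fixpoint tsum (F : R -> R -> R -> R) (t0 : R) (l : list R) : R :=
  match l with
  | t1 :: ((t2 :: _) as l') => F t0 t1 t2 + tsum F t1 l'
  | _ => 0
  end.

Fixpoint osum (G : R -> R -> R) (t0 : R) (l : list R) : R :=
  match l with nil => 0 | t1 :: l' => G t0 t1 + osum G t1 l' end.

Lemma osum_nonneg G t0 l : (forall u v, 0 <= G u v) -> 0 <= osum G t0 l.
Proof. revert t0; induction l; simpl; intros. lra. pose proof (H t0 a). specialize (IHl a H). lra. Qed.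

Lemma tsum_le1 G t0 l : (forall u v, 0 <= G u v) -> tsum (fun u v w => G u v) t0 l <= osum G t0 l.
Proof. revert t0; induction l; intros t0 HG. simpl; lra.
  destruct l as [|t2 l'']. simpl. pose proof (HG t0 a). lra.
  change (G t0 a + tsum (fun u v w => G u v) a (t2 :: l'') <= G t0 a + osum G a (t2 :: l'')).
  specialize (IHl a HG). lra. Qed.

Lemma tsum_le2 G t0 t1 l : (forall u v, 0 <= G u v) -> tsum (fun u v w => G v w) t0 (t1 :: l) <= osum G t1 l.
Proof. revert t0 t1; induction l; intros t0 t1 HG. simpl; lra.
  change (G t1 a + tsum (fun u v w => G v w) t1 (a :: l) <= G t1 a + osum G a l).
  specialize (IHl t1 a HG). lra. Qed.

Lemma tsum_plus F1 F2 t0 l : tsum (fun u v w => F1 u v w + F2 u v w) t0 l = tsum F1 t0 l + tsum F2 t0 l.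
Proof. revert t0; induction l; intros. simpl; ring. destruct l as [|t2 l'']. simpl; ring.
  change (F1 t0 a t2 + F2 t0 a t2 + tsum (fun u v w => F1 u v w + F2 u v w) a (t2 :: l'') =
    F1 t0 a t2 + tsum F1 a (t2 :: l'') + (F2 t0 a t2 + tsum F2 a (t2 :: l''))). rewrite IHl. ring. Qed.

Lemma tsum_scal F c t0 l : tsum (fun u v w => c * F u v w) t0 l = c * tsum F t0 l.
Proof. revert t0; induction l; intros. simpl; ring. destruct l as [|t2 l'']. simpl; ring.
  change (c * F t0 a t2 + tsum (fun u v w => c * F u v w) a (t2 :: l'') = c * (F t0 a t2 + tsum F a (t2 :: l''))). rewrite IHl. ring. Qed.

Lemma tsum_choose F : forall l t0 Sm, (forall u v w, 0 <= F u v w) -> (2 <= length l)%nat -> tsum F t0 l <= Sm ->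
  exists l1 mid nxt l2, l = l1 ++ mid :: nxt :: l2 /\ F (last l1 t0) mid nxt <= Sm / INR (length l - 1).
Proof.
  induction l as [|t1 l IH]; intros t0 Sm HF Hlen HS. simpl in Hlen; lia.
  destruct l as [|t2 l'']. simpl in Hlen; lia.
  change (F t0 t1 t2 + tsum F t1 (t2 :: l'') <= Sm) in HS.
  destruct l'' as [|t3 l3].
  - exists nil, t1, t2, nil. split; auto. simpl. simpl in HS. replace (Sm / 1) with Sm by field. lra.
  - set (N := length (t1 :: t2 :: t3 :: l3)).
    assert (HN : (3 <= N)%nat) by (unfold N; simpl; lia).
    assert (HNr : 2 <= INR (N - 1)). { replace 2 with (INR 2) by (simpl; ring). apply le_INR. lia. }
    destruct (Rle_dec (F t0 t1 t2) (Sm / INR (N - 1))).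
    + exists nil, t1, t2, (t3 :: l3). split; auto.
    + apply Rnot_le_lt in n.
      assert (HS' : tsum F t1 (t2 :: t3 :: l3) <= Sm * INR (N - 2) / INR (N - 1)).
      { assert (INR (N - 2) = INR (N - 1) - 1). { replace (N-1)%nat with (Datatypes.S (N-2)) by lia. rewrite S_INR. ring. }
        rewrite H. unfold Rdiv in *. replace (Sm * (INR (N - 1) - 1) * / INR (N - 1)) with (Sm - Sm * / INR (N-1)) by (field; lra). lra. }
      destruct (IH t1 _ HF ltac:(simpl; lia) HS') as [l1 [mid [nxt [l2 [E Hb]]]]].
      exists (t1 :: l1), mid, nxt, l2. split. rewrite E; auto. rewrite last_cons.
      replace (length (t2 :: t3 :: l3) - 1)%nat with (N - 2)%nat in Hb by (unfold N; simpl; lia).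
      assert (0 < INR (N - 2)) by (apply lt_0_INR; lia).
      replace (Sm * INR (N - 2) / INR (N - 1) / INR (N - 2)) with (Sm / INR (N - 1)) in Hb by (field; lra).
      fold N. auto.
Qed.

Lemma osum_om r p z a b : forall l s t, 1 <= p -> bound (psums r p z a b) -> a <= s -> t <= b -> is_partition s t l ->
  osum (om r p z) s l <= om r p z s t.
Proof.
  induction l; intros s t Hp Hbd Hs Ht Hl. destruct Hl as [_ Hl]; simpl in *. subst. rewrite om_self. lra.
  destruct (part_cons _ _ _ _ Hl) as [H1 Hl']. pose proof (part_le _ _ _ Hl').
  simpl. specialize (IHl a0 t Hp Hbd ltac:(lra) Ht Hl').
  pose proof (om_superadd r p z a b s a0 t ltac:(lra) ltac:(lra) ltac:(lra) ltac:(lra) Hbd). lra.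
Qed.

Lemma om_nonneg_ab r p z a b u v : bound (psums r p z a b) -> a <= u -> u <= v -> v <= b -> 0 <= om r p z u v.
Proof. intros. apply om_nonneg; auto. apply (psums_sub r p z a b); auto. Qed.

Lemma om_nonneg_any r p z s t : 0 <= om r p z s t.
Proof. unfold om, Rsup. destruct excluded_middle_informative as [h|h]. 2: lra.
  destruct (completeness _ _ _) as [M [HM1 HM2]]. simpl. destruct h as [_ [v Hv]].
  pose proof (HM1 v Hv). destruct Hv as [l [_ Hv]]. subst. pose proof (psum_nonneg r p z s l). lra. Qed.

Lemma rpow_inv_sq K p : 1 <= K -> 0 < p -> rpow (/ (K^2)) (1/p) = rpow K (-(2/p)).
Proof. intros. rewrite !rpow_pos. unfold Rpower. f_equal. rewrite ln_Rinv. rewrite ln_pow by lra.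
  simpl. field. lra. apply pow_lt; lra. lra. apply Rinv_0_lt_compat, pow_lt; lra. Qed.

Lemma amgm x y c : 0 <= x -> 0 <= y -> x + y <= c -> x * y <= c^2/4.
Proof. intros. pose proof (pow2_ge_0 (x - y)). assert ((x+y)^2 <= c^2). { apply pow_incr; lra. } nra. Qed.

Lemma vsub_mvmul_gap m (G0 G1 : mat) (xp xm xn : vec) :
  vsub (vadd (mvmul m G0 (vsub xm xp)) (mvmul m G1 (vsub xn xm))) (mvmul m G0 (vsub xn xp)) = mvmul m (msub G1 G0) (vsub xn xm).
Proof. apply functional_extensionality; intros i. unfold vsub, vadd, mvmul, msub.
  rewrite <- sumR_plus, <- sumR_minus. apply sumR_ext; intros; ring. Qed.


Lemma decomp_facts s t l1 mid nxt l2 : is_partition s t (l1 ++ mid :: nxt :: l2) ->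
  s <= last l1 s /\ last l1 s < mid /\ mid < nxt /\ nxt <= t /\ is_partition s t (l1 ++ nxt :: l2).
Proof. intros [Hc Hl]. destruct (chain_app_inv _ _ _ Hc) as [H1 H2]. simpl in H2. destruct H2 as [H2 [H3 H4]].
  rewrite last_app, !last_cons in Hl. pose proof (chain_le_last _ _ H4). rewrite Hl in H. pose proof (chain_le_last _ _ H1).
  repeat split; auto. apply chain_app; auto. simpl. split; auto. lra. rewrite last_app, last_cons. auto. Qed.

Lemma good_triple d m p a b (y x : R -> vec) l s t : 1 < p ->
  bound (psums d p y a b) -> bound (psums m p x a b) -> a <= s -> t <= b -> is_partition s t l -> (2 <= length l)%nat ->
  exists l1 mid nxt l2, l = l1 ++ mid :: nxt :: l2 /\
    vnorm d (vsub (y mid) (y (last l1 s))) * vnorm m (vsub (x nxt) (x mid)) <=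
      pvar_semi d p y s t * pvar_semi m p x s t * rpow (INR (length l - 1)) (-(2/p)).
Proof.
  intros Hp Hby Hbx Has Htb Hl Hlen.
  set (A := om d p y s t). set (B := om m p x s t).
  assert (HA : 0 <= A) by apply om_nonneg_any. assert (HB : 0 <= B) by apply om_nonneg_any.
  pose proof (part_le _ _ _ Hl) as Hst.
  assert (Hstep : forall prev mid nxt, s <= prev -> prev <= mid -> mid <= nxt -> nxt <= t ->
     vnorm d (vsub (y mid) (y prev)) <= rpow (om d p y prev mid) (1/p) /\ vnorm m (vsub (x nxt) (x mid)) <= rpow (om m p x mid nxt) (1/p)
     /\ rpow (om d p y prev mid) (1/p) <= pvar_semi d p y s t /\ rpow (om m p x mid nxt) (1/p) <= pvar_semi m p x s t).
  { intros. rewrite <- !pvar_om. repeat split.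
    apply (pvar_step d p y a b); auto; lra. apply (pvar_step m p x a b); auto; lra.
    apply (pvar_mono d p y a b); auto; lra. apply (pvar_mono m p x a b); auto; lra. }
  assert (HK : 1 <= INR (length l - 1)). { replace 1 with (INR 1) by auto. apply le_INR. lia. }
  pose proof (rpow_nonneg (INR (length l - 1)) (-(2/p))) as HKp.
  destruct (Req_dec A 0) as [HA0|HA0].
  { destruct l as [|t1 [|t2 l'']]; simpl in Hlen; try lia.
    exists nil, t1, t2, l''. split; auto. simpl.
    destruct (decomp_facts s t nil t1 t2 l'' Hl) as [F1 [F2 [F3 [F4 _]]]]. simpl in *.
    destruct (Hstep s t1 t2) as [S1 [S2 [S3 S4]]]; try lra.
    assert (pvar_semi d p y s t = 0) by (rewrite pvar_om; fold A; rewrite HA0; apply rpow_0).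
    rewrite H in *. assert (vnorm d (vsub (y t1) (y s)) = 0) by (pose proof (vnorm_nonneg d (vsub (y t1) (y s))); lra).
    rewrite H0. pose proof (vnorm_nonneg m (vsub (x t2) (x t1))). nra. }
  destruct (Req_dec B 0) as [HB0|HB0].
  { destruct l as [|t1 [|t2 l'']]; simpl in Hlen; try lia.
    exists nil, t1, t2, l''. split; auto. simpl.
    destruct (decomp_facts s t nil t1 t2 l'' Hl) as [F1 [F2 [F3 [F4 _]]]]. simpl in *.
    destruct (Hstep s t1 t2) as [S1 [S2 [S3 S4]]]; try lra.
    assert (pvar_semi m p x s t = 0) by (rewrite pvar_om; fold B; rewrite HB0; apply rpow_0).
    rewrite H in *. assert (vnorm m (vsub (x t2) (x t1)) = 0) by (pose proof (vnorm_nonneg m (vsub (x t2) (x t1))); lra).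
    rewrite H0. pose proof (vnorm_nonneg d (vsub (y t1) (y s))). nra. }
  assert (HAp : 0 < A) by lra. assert (HBp : 0 < B) by lra.
  set (F := fun u v w => / A * om d p y u v + / B * om m p x v w).
  assert (HF : forall u v w, 0 <= F u v w).
  { intros. unfold F. pose proof (om_nonneg_any d p y u v). pose proof (om_nonneg_any m p x v w).
    assert (0 < /A) by (apply Rinv_0_lt_compat; lra). assert (0 < /B) by (apply Rinv_0_lt_compat; lra). nra. }
  assert (Hts : tsum F s l <= 2).
  { unfold F. rewrite tsum_plus, (tsum_scal (fun u v w => om d p y u v)), (tsum_scal (fun u v w => om m p x v w)).
    pose proof (tsum_le1 (om d p y) s l (om_nonneg_any d p y)).
    pose proof (osum_om d p y a b l s t ltac:(lra) Hby Has Htb Hl).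
    destruct l as [|t1 l']. simpl in Hlen; lia.
    pose proof (tsum_le2 (om m p x) s t1 l' (om_nonneg_any m p x)).
    pose proof (osum_om m p x a b (t1 :: l') s t ltac:(lra) Hbx Has Htb Hl). simpl in H2.
    pose proof (om_nonneg_any m p x s t1). fold A B in H0, H2.
    assert (/A * tsum (fun u v w => om d p y u v) s (t1 :: l') <= 1).
    { apply Rmult_le_reg_l with A; auto. rewrite <- Rmult_assoc, Rinv_r by lra. lra. }
    assert (/B * tsum (fun u v w => om m p x v w) s (t1 :: l') <= 1).
    { apply Rmult_le_reg_l with B; auto. rewrite <- Rmult_assoc, Rinv_r by lra. lra. }
    lra. }
  destruct (tsum_choose F l s 2 HF Hlen Hts) as [l1 [mid [nxt [l2 [E Hb]]]]].
  exists l1, mid, nxt, l2. split; auto.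
  rewrite E in Hl. destruct (decomp_facts _ _ _ _ _ _ Hl) as [F1 [F2 [F3 [F4 _]]]].
  destruct (Hstep (last l1 s) mid nxt) as [S1 [S2 [S3 S4]]]; try lra.
  set (K := INR (length l - 1)) in *.
  set (oy := om d p y (last l1 s) mid) in *. set (ox := om m p x mid nxt) in *.
  assert (Hoy : 0 <= oy) by apply om_nonneg_any. assert (Hox : 0 <= ox) by apply om_nonneg_any.
  assert (Hprod : oy * ox <= A * B * / (K^2)).
  { unfold F in Hb. fold oy ox in Hb.
    assert (/A * oy * (/B * ox) <= (2/K)^2/4). { apply amgm. apply Rmult_le_pos; [left; apply Rinv_0_lt_compat|]; lra.
      apply Rmult_le_pos; [left; apply Rinv_0_lt_compat|]; lra. auto. }
    replace ((2/K)^2/4) with (/ (K^2)) in H by (field; lra).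
    replace (oy * ox) with (A * B * (/A * oy * (/B * ox))) by (field; lra).
    apply Rmult_le_compat_l. apply Rmult_le_pos; lra. auto. }
  assert (Hr : rpow oy (1/p) * rpow ox (1/p) <= pvar_semi d p y s t * pvar_semi m p x s t * rpow K (-(2/p))).
  { rewrite <- rpow_mul by auto. rewrite !pvar_om. fold A B. rewrite <- rpow_inv_sq by lra.
    rewrite <- !rpow_mul. apply rpow_mono. left; apply Rdiv_lt_0_compat; lra. split. apply Rmult_le_pos; auto. auto.
    apply Rmult_le_pos; lra. left; apply Rinv_0_lt_compat, pow_lt; lra. lra. lra. }
  eapply Rle_trans; [|apply Hr]. apply Rmult_le_compat; auto; apply vnorm_nonneg.
Qed.

Lemma zsum_nonneg th N : 0 <= zsum th N.
Proof. unfold zsum. apply sumR_nonneg. intros; apply rpow_nonneg. Qed.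

Lemma young d m p a b (g : vec -> mat) Cg (y x : R -> vec) : 1 < p -> 0 <= Cg ->
  (forall u v w, vnorm d (mvmul m (msub (g u) (g v)) w) <= Cg * vnorm d (vsub u v) * vnorm m w) ->
  bound (psums d p y a b) -> bound (psums m p x a b) ->
  forall N l s t, length l = N -> a <= s -> t <= b -> is_partition s t l ->
  vnorm d (vsub (rs_sum m (fun r => g (y r)) x s l) (mvmul m (g (y s)) (vsub (x t) (x s)))) <=
    Cg * pvar_semi d p y s t * pvar_semi m p x s t * zsum (2/p) (N - 1).
Proof.
  intros Hp HCg Hgl Hby Hbx. induction N as [N IH] using (well_founded_induction Wf_nat.lt_wf). intros l s t Hlen Has Htb Hl.
  assert (Hr : 0 <= Cg * pvar_semi d p y s t * pvar_semi m p x s t * zsum (2/p) (N - 1)).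
  { repeat apply Rmult_le_pos; auto; try apply pvar_nonneg. apply zsum_nonneg. }
  destruct l as [|t1 [|t2 l'']].
  - destruct Hl as [_ Hl]. simpl in Hl. subst t. simpl.
    rewrite (vnorm_ext d _ vzero). rewrite vnorm_vzero; auto. intros i _. unfold vsub, vzero, mvmul.
    replace (sumR m (fun j => g (y s) i j * (x s j - x s j))) with (sumR m (fun j => 0 * 0)). 2: apply sumR_ext; intros; ring.
    rewrite sumR_scal. ring.
  - destruct Hl as [_ Hl]. simpl in Hl. subst t1. simpl.
    rewrite (vnorm_ext d _ vzero). rewrite vnorm_vzero; auto. intros i _. unfold vsub, vzero, vadd. ring.
  - set (l := t1 :: t2 :: l'') in *.
    destruct (good_triple d m p a b y x l s t Hp Hby Hbx Has Htb Hl ltac:(unfold l; simpl; lia)) as [l1 [mid [nxt [l2 [E Hb]]]]].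
    rewrite E in Hl. destruct (decomp_facts _ _ _ _ _ _ Hl) as [F1 [F2 [F3 [F4 Hl']]]].
    assert (Hlen' : length (l1 ++ nxt :: l2) = (N - 1)%nat). { rewrite <- Hlen, E. rewrite !length_app. simpl. lia. }
    specialize (IH (N-1)%nat ltac:(unfold l in Hlen; simpl in Hlen; lia) _ s t Hlen' Has Htb Hl').
    set (G := fun r => g (y r)) in *.
    set (prev := last l1 s) in *.
    assert (Hdiff : vsub (rs_sum m G x s l) (rs_sum m G x s (l1 ++ nxt :: l2)) = mvmul m (msub (G mid) (G prev)) (vsub (x nxt) (x mid))).
    { rewrite E, !rs_sum_app. fold prev. simpl. apply functional_extensionality; intro i.
      pose proof (f_equal (fun v => v i) (vsub_mvmul_gap m (G prev) (G mid) (x prev) (x mid) (x nxt))) as HH.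
      unfold vsub, vadd in *. simpl in *. lra. }
    eapply Rle_trans. apply (vnorm_sub_triangle d _ (rs_sum m G x s (l1 ++ nxt :: l2))).
    rewrite Hdiff. eapply Rle_trans. apply Rplus_le_compat_r. apply Hgl.
    fold G prev in Hb. rewrite E in Hb. 
    replace (length (l1 ++ mid :: nxt :: l2) - 1)%nat with (N - 1)%nat in Hb by (rewrite <- Hlen, E; auto).
    replace (N - 1)%nat with (Datatypes.S (N - 2)) by (unfold l in Hlen; simpl in Hlen; lia).
    replace (N - 1 - 1)%nat with (N - 2)%nat in IH by lia.
    change (zsum (2/p) (Datatypes.S (N - 2))) with (zsum (2/p) (N-2) + rpow (INR (Datatypes.S (N-2))) (-(2/p))).
    replace (Datatypes.S (N - 2)) with (N - 1)%nat by (unfold l in Hlen; simpl in Hlen; lia).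
    assert (Cg * vnorm d (vsub (y mid) (y prev)) * vnorm m (vsub (x nxt) (x mid)) <=
       Cg * (pvar_semi d p y s t * pvar_semi m p x s t * rpow (INR (N - 1)) (- (2 / p)))).
    { rewrite Rmult_assoc. apply Rmult_le_compat_l; auto. }
    nra.
Qed.

Fixpoint unifr (t0 h : R) (N : nat) : list R :=
  match N with O => nil | S N' => (t0 + h) :: unifr (t0 + h) h N' end.

Lemma unifr_chain t0 h N : 0 < h -> chain_lt t0 (unifr t0 h N).
Proof. revert t0; induction N; simpl; intros; auto. split. lra. auto. Qed.

Lemma unifr_last t0 h N : last (unifr t0 h N) t0 = t0 + INR N * h.
Proof. revert t0; induction N; intros. simpl; ring. change (last ((t0 + h) :: unifr (t0 + h) h N) t0 = t0 + INR (S N) * h).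
  rewrite last_cons, IHN, S_INR. ring. Qed.

Lemma mesh_nonneg t0 l : 0 <= mesh t0 l.
Proof. revert t0; induction l; simpl; intros. lra. eapply Rle_trans. apply IHl. apply Rmax_r. Qed.

Lemma unifr_mesh t0 h N : 0 <= h -> mesh t0 (unifr t0 h N) <= h.
Proof. revert t0; induction N; simpl; intros. lra. apply Rmax_lub. lra. auto. Qed.

Lemma mesh_app t0 l1 l2 : mesh t0 (l1 ++ l2) <= Rmax (mesh t0 l1) (mesh (last l1 t0) l2).
Proof. revert t0; induction l1; intros. simpl. apply Rmax_r.
  rewrite <- app_comm_cons, last_cons. simpl. apply Rmax_lub.
  eapply Rle_trans; [|apply Rmax_l]. apply Rmax_l.
  eapply Rle_trans. apply IHl1. apply Rmax_lub. eapply Rle_trans; [|apply Rmax_l]. apply Rmax_r. apply Rmax_r. Qed.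

Definition part_u (t0 t1 : R) (N : nat) : list R :=
  if Rlt_dec t0 t1 then unifr t0 ((t1 - t0) / INR N) N else nil.

Lemma part_u_ok t0 t1 N : t0 <= t1 -> (1 <= N)%nat -> is_partition t0 t1 (part_u t0 t1 N) /\ mesh t0 (part_u t0 t1 N) <= (t1 - t0) / INR N.
Proof. intros. assert (0 < INR N) by (apply lt_0_INR; lia). unfold part_u. destruct (Rlt_dec t0 t1).
  - split. split. apply unifr_chain. apply Rdiv_lt_0_compat; lra. rewrite unifr_last. field. lra.
    apply unifr_mesh. left; apply Rdiv_lt_0_compat; lra.
  - split. split; simpl; auto; lra. simpl. assert (t0 = t1) by lra. subst. unfold Rdiv. rewrite Rminus_diag, Rmult_0_l. lra. Qed.

Lemma vnorm_vsub_le n u v : vnorm n (vsub u v) <= vnorm n u + vnorm n v.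
Proof. replace (vsub u v) with (vadd u (fun i => (-1) * v i)). eapply Rle_trans. apply vnorm_triangle.
  rewrite vnorm_scal. replace (Rabs (-1)) with 1 by (rewrite Rabs_left; lra). lra.
  apply functional_extensionality; intros; unfold vadd, vsub; ring. Qed.

Lemma rs_diff d c H X a s t Is It : a <= s -> s <= t -> RS_integral d c H X a s Is -> RS_integral d c H X a t It ->
  forall eps, 0 < eps -> exists Q, is_partition s t Q /\ vnorm d (vsub (rs_sum c H X s Q) (vsub It Is)) < eps.
Proof.
  intros Has Hst HIs HIt eps He.
  destruct (HIs (eps/2) ltac:(lra)) as [d1 [Hd1 H1]]. destruct (HIt (eps/2) ltac:(lra)) as [d2 [Hd2 H2]].
  set (del := Rmin d1 d2). assert (Hdel : 0 < del) by (apply Rmin_pos; lra).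
  destruct (INR_unbounded ((t - a) / del)) as [N0 HN0]. set (N := S N0).
  assert (HN : INR N0 < INR N) by (unfold N; rewrite S_INR; lra).
  assert (HNp : 0 < INR N) by (apply lt_0_INR; unfold N; lia).
  assert (Hm : (t - a) / INR N < del).
  { assert (t - a < del * INR N). { assert (Hq : (t-a)/del < INR N) by lra. apply (Rmult_lt_compat_l del) in Hq; auto.
      replace (del * ((t-a)/del)) with (t-a) in Hq by (field; lra). lra. }
    apply Rmult_lt_reg_r with (INR N); auto. replace ((t-a)/INR N * INR N) with (t-a) by (field; lra). lra. }
  destruct (part_u_ok a s N Has ltac:(unfold N; lia)) as [P1 M1].
  destruct (part_u_ok s t N Hst ltac:(unfold N; lia)) as [P2 M2].
  exists (part_u s t N). split; auto.
  assert (Hmesh1 : mesh a (part_u a s N) < d1).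
  { eapply Rle_lt_trans. apply M1. apply Rle_lt_trans with ((t-a)/INR N). unfold Rdiv. apply Rmult_le_compat_r. left; apply Rinv_0_lt_compat; lra. lra.
    eapply Rlt_le_trans. apply Hm. apply Rmin_l. }
  assert (P12 := part_app _ _ _ _ _ P1 P2).
  assert (Hmesh2 : mesh a (part_u a s N ++ part_u s t N) < d2).
  { eapply Rle_lt_trans. apply mesh_app. destruct P1 as [_ E1]. rewrite E1. apply Rmax_lub_lt.
    eapply Rle_lt_trans. apply M1. apply Rle_lt_trans with ((t-a)/INR N). unfold Rdiv. apply Rmult_le_compat_r. left; apply Rinv_0_lt_compat; lra. lra.
    eapply Rlt_le_trans. apply Hm. apply Rmin_r.
    eapply Rle_lt_trans. apply M2. apply Rle_lt_trans with ((t-a)/INR N). unfold Rdiv. apply Rmult_le_compat_r. left; apply Rinv_0_lt_compat; lra. lra.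
    eapply Rlt_le_trans. apply Hm. apply Rmin_r. }
  specialize (H1 _ P1 Hmesh1). specialize (H2 _ P12 Hmesh2).
  rewrite rs_sum_app in H2. destruct P1 as [_ E1]. rewrite E1 in H2.
  replace (vsub (rs_sum c H X s (part_u s t N)) (vsub It Is)) with
    (vsub (vsub (vadd (rs_sum c H X a (part_u a s N)) (rs_sum c H X s (part_u s t N))) It) (vsub (rs_sum c H X a (part_u a s N)) Is)).
  eapply Rle_lt_trans. apply vnorm_vsub_le. lra.
  apply functional_extensionality; intros; unfold vsub, vadd; ring.
Qed.

Lemma rs_limit_bound d c H X a s t Is It M : a <= s -> s <= t -> RS_integral d c H X a s Is -> RS_integral d c H X a t It ->
  (forall Q, is_partition s t Q -> vnorm d (rs_sum c H X s Q) <= M) -> vnorm d (vsub It Is) <= M.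
Proof. intros. apply le_eps. intros eps He. destruct (rs_diff d c H X a s t Is It H0 H1 H2 H3 eps He) as [Q [HQ HQ2]].
  specialize (H4 Q HQ). pose proof (vnorm_add_le d (vsub It Is) (rs_sum c H X s Q)).
  rewrite vnorm_vsub_sym in HQ2. lra. Qed.

Lemma drift_rs d (F : R -> vec) (Gm : R -> R) : forall l t0, chain_lt t0 l ->
  (forall u v, t0 <= u -> u < v -> v <= last l t0 -> (v - u) * vnorm d (F u) <= Gm v - Gm u) ->
  vnorm d (rs_sum 1 (fun s => fun i _ => F s i) (fun s => fun _ => s) t0 l) <= Gm (last l t0) - Gm t0.
Proof.
  induction l as [|t1 l IH]; intros t0 Hc Hg. simpl. rewrite vnorm_vzero. lra.
  destruct Hc as [H01 Hc]. rewrite last_cons in *. pose proof (chain_le_last _ _ Hc).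
  simpl. eapply Rle_trans. apply vnorm_triangle.
  assert (E : mvmul 1 (fun i _ => F t0 i) (vsub (fun _ => t1) (fun _ => t0)) = fun i => (t1 - t0) * F t0 i).
  { apply functional_extensionality; intros. unfold mvmul, vsub. simpl. ring. }
  rewrite E, vnorm_scal, Rabs_right by lra.
  assert (IH' := IH t1 Hc ltac:(intros; apply Hg; lra)).
  specialize (Hg t0 t1 ltac:(lra) H01 H).
  rewrite Rmult_comm. lra.
Qed.

Record hyp (d m : nat) (p a b : R) (A : mat) (f : vec -> vec) (g : vec -> mat) (Cf Cg : R) (x y : R -> vec) : Prop := {
  h_p : 1 < p < 2; h_ab : a <= b; h_Cf : 0 < Cf; h_Cg : 0 < Cg;
  h_f : lipschitz_f d f Cf; h_g : lipschitz_g d m g Cg;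
  h_gb : exists M, forall u, opnorm d m (g u) <= M;
  h_bx : bound (psums m p x a b); h_cx : contin m x a b;
  h_by : bound (psums d p y a b); h_sol : is_solution d m A f g x a b y }.


Lemma S1 d A f Cf v : lipschitz_f d f Cf -> 0 <= Cf ->
  vnorm d (vadd (mvmul d A v) (f v)) <= (opnorm d d A + Cf) * vnorm d v + vnorm d (f vzero).
Proof. intros Hf HCf. eapply Rle_trans. apply vnorm_triangle. pose proof (opnorm_spec d d A v).
  pose proof (vnorm_add_le d (f v) (f vzero)). specialize (Hf v vzero).
  replace (vsub v vzero) with v in Hf by (apply functional_extensionality; intros; unfold vsub, vzero; ring). lra. Qed.

Lemma S2 d m g : (exists M, forall u, opnorm d m (g u) <= M) -> forall u, opnorm d m (g u) <= sup_norm_g d m g.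
Proof. intros [M HM] u. unfold sup_norm_g. apply Rsup_ub. exists M. intros s [v Hv]. subst; auto. exists u; auto. Qed.

Lemma S2' d m g : (exists M, forall u, opnorm d m (g u) <= M) -> 0 <= sup_norm_g d m g.
Proof. intros. eapply Rle_trans. apply (opnorm_nonneg d m (g vzero)). apply S2; auto. Qed.

Lemma S3 d m g Cg : lipschitz_g d m g Cg -> forall u v w, vnorm d (mvmul m (msub (g u) (g v)) w) <= Cg * vnorm d (vsub u v) * vnorm m w.
Proof. intros Hg u v w. eapply Rle_trans. apply opnorm_spec. apply Rmult_le_compat_r. apply vnorm_nonneg. apply Hg. Qed.

Lemma zsum_K p N : 1 < p < 2 -> zsum (2/p) N <= Kp p + 1.
Proof. intros. destruct (Kp_bound p H). assert (1 < 2/p). { apply Rmult_lt_reg_r with p. lra. field_simplify; lra. }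
  pose proof (zsum_bound (2/p) N H2). lra. Qed.

Lemma S4 d m p a b A f g Cf Cg x y (H : hyp d m p a b A f g Cf Cg x y) u s t r I2s I2t :
  a <= u -> u <= s -> s <= t -> t <= r -> r <= b ->
  RS_integral d m (fun s => g (y s)) x a s I2s -> RS_integral d m (fun s => g (y s)) x a t I2t ->
  vnorm d (vsub I2t I2s) <= (sup_norm_g d m g + (Kp p + 1) * Cg * pvar_semi d p y u r) * pvar_semi m p x s t.
Proof.
  intros H1 H2 H3 H4 H5 Hs Ht. destruct H. 
  apply (rs_limit_bound d m (fun s => g (y s)) x a s t); auto; try lra. intros Q HQ.
  pose proof (young d m p a b g Cg y x ltac:(lra) ltac:(lra) (S3 d m g Cg h_g0) h_by0 h_bx0 (length Q) Q s t eq_refl ltac:(lra) ltac:(lra) HQ) as Y.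
  eapply Rle_trans. apply (vnorm_add_le d _ (mvmul m (g (y s)) (vsub (x t) (x s)))).
  assert (E1 : vnorm d (mvmul m (g (y s)) (vsub (x t) (x s))) <= sup_norm_g d m g * pvar_semi m p x s t).
  { eapply Rle_trans. apply opnorm_spec. apply Rmult_le_compat. apply opnorm_nonneg. apply vnorm_nonneg. apply S2; auto.
    apply (pvar_step m p x a b); auto; lra. }
  assert (E2 : pvar_semi d p y s t <= pvar_semi d p y u r) by (apply (pvar_mono d p y a b); auto; lra).
  pose proof (zsum_K p (length Q - 1) h_p0). pose proof (zsum_nonneg (2/p) (length Q - 1)).
  pose proof (pvar_nonneg d p y s t). pose proof (pvar_nonneg m p x s t).
  assert (Cg * pvar_semi d p y s t * pvar_semi m p x s t * zsum (2 / p) (length Q - 1) <= (Kp p + 1) * Cg * pvar_semi d p y u r * pvar_semi m p x s t).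
  { replace (Cg * pvar_semi d p y s t * pvar_semi m p x s t * zsum (2 / p) (length Q - 1)) with
      ((Cg * pvar_semi m p x s t) * (pvar_semi d p y s t * zsum (2 / p) (length Q - 1))) by ring.
    replace ((Kp p + 1) * Cg * pvar_semi d p y u r * pvar_semi m p x s t) with ((Cg * pvar_semi m p x s t) * (pvar_semi d p y u r * (Kp p + 1))) by ring.
    apply Rmult_le_compat_l. apply Rmult_le_pos; lra. apply Rmult_le_compat; lra. }
  lra.
Qed.

Lemma S5 d m p a b A f g Cf Cg x y (H : hyp d m p a b A f g Cf Cg x y) u s t r (Gm : R -> R) :
  a <= u -> u <= s -> s <= t -> t <= r -> r <= b ->
  (forall v w, s <= v -> v < w -> w <= t -> (w - v) * ((opnorm d d A + Cf) * vnorm d (y v) + vnorm d (f vzero)) <= Gm w - Gm v) ->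
  vnorm d (vsub (y t) (y s)) <= (Gm t - Gm s) + (sup_norm_g d m g + (Kp p + 1) * Cg * pvar_semi d p y u r) * pvar_semi m p x s t.
Proof.
  intros H1 H2 H3 H4 H5 HG. pose proof H as H'. destruct H'.
  destruct (h_sol0 s ltac:(lra)) as [I1s [I2s [Hs1 [Hs2 Hs3]]]].
  destruct (h_sol0 t ltac:(lra)) as [I1t [I2t [Ht1 [Ht2 Ht3]]]].
  rewrite (vnorm_ext d _ (vadd (vsub I1t I1s) (vsub I2t I2s))).
  2: { intros i Hi. unfold vsub, vadd. rewrite Hs3, Ht3 by auto. ring. }
  eapply Rle_trans. apply vnorm_triangle. apply Rplus_le_compat.
  - apply (rs_limit_bound d 1 (fun s i _ => vadd (mvmul d A (y s)) (f (y s)) i) (fun s _ => s) a s t); auto; try lra. intros Q HQ. destruct HQ as [HQ1 HQ2].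
    replace (Gm t) with (Gm (last Q s)) by (rewrite HQ2; auto). apply drift_rs; auto. intros v w Hv Hvw Hw. rewrite HQ2 in Hw.
    specialize (HG v w Hv Hvw Hw). pose proof (S1 d A f Cf (y v) h_f0 ltac:(lra)).
    change (fun i : nat => vadd (mvmul d A (y v)) (f (y v)) i) with (vadd (mvmul d A (y v)) (f (y v))). eapply Rle_trans; [|apply HG]. apply Rmult_le_compat_l; lra.
  - apply (S4 d m p a b A f g Cf Cg x y H u s t r); auto.
Qed.

Lemma lsum_superadd' {T} q (L : list T) (f : T -> R) : 1 <= q -> (forall i, In i L -> 0 <= f i) ->
  lsum (map (fun i => rpow (f i) q) L) <= rpow (lsum (map f L)) q.
Proof. intros. induction L; simpl. rewrite rpow_0; lra.
  assert (0 <= lsum (map f L)). { clear IHL. induction L; simpl. lra. pose proof (H0 a0 ltac:(simpl; auto)). 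
    assert (0 <= lsum (map f L)). apply IHL. intros; apply H0. simpl in *. destruct H2; auto. lra. }
  eapply Rle_trans. 2: apply rpow_superadd; auto. pose proof (IHL ltac:(intros; apply H0; simpl; auto)). lra. apply H0; simpl; auto. Qed.

Fixpoint pieces (t0 : R) (l : list R) : list (R*R) :=
  match l with nil => nil | t1 :: l' => (t0,t1) :: pieces t1 l' end.

Lemma psum_pieces r p z t0 l : psum r p z t0 l = lsum (map (fun pr => rpow (vnorm r (vsub (z (snd pr)) (z (fst pr)))) p) (pieces t0 l)).
Proof. revert t0; induction l; simpl; intros; auto. rewrite IHl. auto. Qed.

Lemma osum_pieces G t0 l : osum G t0 l = lsum (map (fun pr => G (fst pr) (snd pr)) (pieces t0 l)).
Proof. revert t0; induction l; simpl; intros; auto. rewrite IHl. auto. Qed.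

Lemma pieces_in t0 l pr : chain_lt t0 l -> In pr (pieces t0 l) -> t0 <= fst pr /\ fst pr < snd pr /\ snd pr <= last l t0.
Proof. revert t0; induction l; intros t0 Hc Hi. simpl in Hi; contradiction. destruct Hc as [H1 H2].
  pose proof (chain_le_last _ _ H2). rewrite last_cons. cbn [pieces In] in Hi.
  destruct Hi as [<-|Hi]. simpl. lra. specialize (IHl a H2 Hi). lra. Qed.

Lemma pieces_tele (Gm : R -> R) t0 l : lsum (map (fun pr => Gm (snd pr) - Gm (fst pr)) (pieces t0 l)) = Gm (last l t0) - Gm t0.
Proof. revert t0; induction l; intros. simpl; ring. rewrite last_cons. cbn [pieces map lsum fold_right]. unfold lsum in IHl. rewrite IHl. simpl. ring. Qed.

Lemma S6 d m p a b A f g Cf Cg x y (H : hyp d m p a b A f g Cf Cg x y) u r (Gm : R -> R) :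
  a <= u -> u <= r -> r <= b -> (Kp p + 1) * Cg * pvar_semi m p x u r <= 1/2 ->
  (forall v w, u <= v -> v < w -> w <= r -> (w - v) * ((opnorm d d A + Cf) * vnorm d (y v) + vnorm d (f vzero)) <= Gm w - Gm v) ->
  pvar_semi d p y u r <= 2 * (Gm r - Gm u + sup_norm_g d m g * pvar_semi m p x u r).
Proof.
  intros H1 H2 H3 Hsmall HG. pose proof H as H'. destruct H'.
  set (Y := pvar_semi d p y u r). set (X := pvar_semi m p x u r). set (Gs := sup_norm_g d m g).
  set (c0 := Gs + (Kp p + 1) * Cg * Y).
  assert (HGs : 0 <= Gs) by (apply S2'; auto).
  assert (HY : 0 <= Y) by apply pvar_nonneg. assert (HX : 0 <= X) by apply pvar_nonneg.
  assert (HK : 0 < Kp p) by (apply Kp_bound; auto).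
  assert (HKY : 0 <= (Kp p + 1) * Cg * Y) by (apply Rmult_le_pos; [apply Rmult_le_pos|]; lra).
  assert (Hc0 : 0 <= c0) by (unfold c0; lra).
  assert (HL : forall v, 0 <= (opnorm d d A + Cf) * vnorm d (y v) + vnorm d (f vzero)).
  { intros. pose proof (opnorm_nonneg d d A). pose proof (vnorm_nonneg d (y v)). pose proof (vnorm_nonneg d (f vzero)).
    apply Rplus_le_le_0_compat; auto. apply Rmult_le_pos; lra. }
  assert (HGm : forall v w, u <= v -> v < w -> w <= r -> 0 <= Gm w - Gm v).
  { intros. eapply Rle_trans; [|apply HG; auto]. apply Rmult_le_pos; auto; lra. }
  assert (HW : 0 <= Gm r - Gm u). { destruct (Req_dec u r). subst; lra. apply HGm; lra. }
  assert (Hmain : Y <= (Gm r - Gm u) + c0 * X).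
  { apply pvar_le. lra. auto. apply Rplus_le_le_0_compat; auto. apply Rmult_le_pos; auto.
    intros l Hl. destruct Hl as [Hc Hlast]. rewrite psum_pieces.
    set (P := pieces u l).
    set (al := fun pr : R*R => Gm (snd pr) - Gm (fst pr)). set (be := fun pr : R*R => c0 * pvar_semi m p x (fst pr) (snd pr)).
    assert (Hin : forall pr, In pr P -> u <= fst pr /\ fst pr < snd pr /\ snd pr <= r).
    { intros. rewrite <- Hlast. apply pieces_in; auto. }
    apply Rle_trans with (lsum (map (fun pr => rpow (al pr + be pr) p) P)).
    { apply lsum_le. intros pr Hpr. destruct (Hin pr Hpr) as [Q1 [Q2 Q3]]. apply rpow_mono. lra. split. apply vnorm_nonneg.
      unfold al, be, c0. apply (S5 d m p a b A f g Cf Cg x y H u (fst pr) (snd pr) r Gm); try lra.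
      intros; apply HG; lra. }
    apply minkowski; auto; try lra.
    - intros pr Hpr. destruct (Hin pr Hpr) as [Q1 [Q2 Q3]]. unfold al. apply HGm; lra.
    - intros pr Hpr. unfold be. apply Rmult_le_pos; auto. apply pvar_nonneg.
    - apply Rmult_le_pos; auto.
    - eapply Rle_trans. apply lsum_superadd'. lra. intros pr Hpr. destruct (Hin pr Hpr) as [Q1 [Q2 Q3]]. unfold al. apply HGm; lra.
      unfold al, P. rewrite pieces_tele, Hlast. lra.
    - apply Rle_trans with (lsum (map (fun pr => rpow c0 p * om m p x (fst pr) (snd pr)) P)).
      { apply lsum_le. intros pr Hpr. destruct (Hin pr Hpr) as [Q1 [Q2 Q3]]. unfold be. rewrite rpow_mul; auto. 2: apply pvar_nonneg.
        rewrite (pvar_pow m p x a b); auto; lra. }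
      rewrite lsum_scal. unfold P. rewrite <- osum_pieces.
      pose proof (osum_om m p x a b l u r ltac:(lra) h_bx0 H1 H3 (conj Hc Hlast)).
      rewrite rpow_mul by auto. unfold X. rewrite (pvar_pow m p x a b) by (auto; lra).
      apply Rmult_le_compat_l; auto. apply rpow_nonneg. }
  unfold c0 in Hmain.
  assert ((Kp p + 1) * Cg * Y * X <= Y / 2).
  { replace ((Kp p + 1) * Cg * Y * X) with (Y * ((Kp p + 1) * Cg * X)) by ring. fold X in Hsmall.
    replace (Y/2) with (Y * (1/2)) by field. apply Rmult_le_compat_l; auto. }
  fold Gs. lra.
Qed.

Lemma exp_tangent al x y : 0 <= al -> x <= y -> exp (al * x) * (1 + al * (y - x)) <= exp (al * y).
Proof. intros. replace (al * y) with (al * x + al * (y - x)) by ring. rewrite exp_plus.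
  apply Rmult_le_compat_l. left; apply exp_pos. apply exp_ineq1_le. Qed.

Lemma S7_step d m p a b A f g Cf Cg x y (H : hyp d m p a b A f g Cf Cg x y) u v rho h eps :
  let L := opnorm d d A + Cf in let F := vnorm d (f vzero) in
  let X := pvar_semi m p x u v in let Gs := sup_norm_g d m g in
  let c' := vnorm d (y u) + F / L + 2 * Gs * X in
  let Bmax := L * (vnorm d (y u) + pvar_semi d p y u v) + F in
  let Psi := fun r => (c' + eps) * exp (2 * L * (r - u)) - F / L in
  a <= u -> u <= rho -> rho <= v -> v <= b -> 0 < eps -> 0 < h -> 2 * Bmax * h <= eps ->
  (Kp p + 1) * Cg * X <= 1/2 ->
  (forall l, u <= l <= rho -> vnorm d (y u) + pvar_semi d p y u l <= Psi l) ->
  forall r, rho < r -> r <= v -> r <= rho + h -> vnorm d (y u) + pvar_semi d p y u r <= Psi r.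
Proof.
  intros L F X Gs c' Bmax Psi Hau Hur Hrv Hvb He Hh HBh Hsmall IH r Hr1 Hr2 Hr3.
  assert (EPsi : forall r, Psi r = (c' + eps) * exp (2 * L * (r - u)) - F / L) by reflexivity.
  assert (Ec' : c' = vnorm d (y u) + F / L + 2 * Gs * X) by reflexivity.
  assert (EBmax : Bmax = L * (vnorm d (y u) + pvar_semi d p y u v) + F) by reflexivity.
  assert (EX : X = pvar_semi m p x u v) by reflexivity.
  assert (EL : L = opnorm d d A + Cf) by reflexivity.
  assert (EGs : Gs = sup_norm_g d m g) by reflexivity.
  assert (EF : F = vnorm d (f vzero)) by reflexivity.
  clearbody Psi c' Bmax X Gs L F.
  pose proof H as H'. destruct H' as [h_p0 h_ab0 h_Cf0 h_Cg0 h_f0 h_g0 h_gb0 h_bx0 h_cx0 h_by0 h_sol0].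
  assert (HL : 0 < L) by (rewrite EL; pose proof (opnorm_nonneg d d A); lra).
  assert (HF : 0 <= F) by (rewrite EF; apply vnorm_nonneg).
  assert (HGs : 0 <= Gs) by (rewrite EGs; apply S2'; auto).
  assert (HX : 0 <= X) by (rewrite EX; apply pvar_nonneg).
  assert (Hc' : 0 <= c'). { rewrite Ec'. pose proof (vnorm_nonneg d (y u)). assert (0 <= F/L) by (apply Rmult_le_pos; [lra|left; apply Rinv_0_lt_compat; lra]).
    assert (0 <= 2*Gs*X) by (apply Rmult_le_pos; [apply Rmult_le_pos|]; lra). lra. }
  set (E := fun t => exp (2 * L * (t - u))). assert (EE : forall t, E t = exp (2 * L * (t - u))) by reflexivity. clearbody E.
  assert (HyB : forall l, u <= l <= v -> L * vnorm d (y l) + F <= Bmax).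
  { intros. rewrite EBmax. apply Rplus_le_compat_r. apply Rmult_le_compat_l. lra.
    pose proof (vnorm_add_le d (y l) (y u)). pose proof (pvar_step d p y a b u l ltac:(lra) Hau ltac:(lra) ltac:(lra) h_by0).
    pose proof (pvar_mono d p y a b u u v l ltac:(lra) Hau ltac:(lra) ltac:(lra) ltac:(lra) Hvb h_by0). lra. }
  assert (Hyl : forall l, u <= l <= rho -> L * vnorm d (y l) + F <= L * (c' + eps) * E l).
  { intros. specialize (IH l H0). pose proof (vnorm_add_le d (y l) (y u)).
    pose proof (pvar_step d p y a b u l ltac:(lra) Hau ltac:(lra) ltac:(lra) h_by0).
    assert (vnorm d (y l) <= Psi l) by lra. rewrite EPsi, <- EE in H3.
    apply Rmult_le_compat_l with (r := L) in H3; [|lra].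
    replace (L * ((c' + eps) * E l - F / L)) with (L * (c' + eps) * E l - F) in H3 by (field; lra). lra. }
  set (Gm := fun t => (c' + eps) * E (Rmin t rho) / 2 + Bmax * Rmax t rho).
  assert (EGm : forall t, Gm t = (c' + eps) * E (Rmin t rho) / 2 + Bmax * Rmax t rho) by reflexivity. clearbody Gm.
  assert (HGm : forall l w, u <= l -> l < w -> w <= r -> (w - l) * (L * vnorm d (y l) + F) <= Gm w - Gm l).
  { intros l w H1 H2 H3. rewrite !EGm.
    assert (HB1 : L * vnorm d (y l) + F <= Bmax) by (apply HyB; lra).
    destruct (Rle_dec rho l).
    - rewrite (Rmin_right l rho), (Rmin_right w rho), (Rmax_left l rho), (Rmax_left w rho) by lra.
      assert (0 <= w - l) by lra. nra.
    - apply Rnot_le_lt in n. rewrite (Rmin_left l rho), (Rmax_right l rho) by lra.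
      assert (HB2 := Hyl l ltac:(lra)).
      assert (Hmm : l <= Rmin w rho /\ Rmin w rho <= w /\ Rmax w rho - rho = w - Rmin w rho).
      { unfold Rmin, Rmax. destruct (Rle_dec w rho); lra. }
      remember (Rmin w rho) as mm.
      assert (HE : E l * (1 + 2 * L * (mm - l)) <= E mm).
      { rewrite !EE.
        pose proof (exp_tangent (2*L) (l - u) (mm - u) ltac:(lra) ltac:(lra)).
        replace (2 * L * (mm - u - (l - u))) with (2 * L * (mm - l)) in H0 by ring. lra. }
      assert (HEp : 0 < E l) by (rewrite EE; apply exp_pos).
      assert (K1 : (mm - l) * (L * vnorm d (y l) + F) <= (c' + eps) * (E mm - E l) / 2).
      { apply Rle_trans with ((mm - l) * (L * (c' + eps) * E l)). apply Rmult_le_compat_l; lra.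
        assert ((c' + eps) * (E l * (2 * L * (mm - l))) <= (c' + eps) * (E mm - E l)).
        { apply Rmult_le_compat_l; lra. } 
        replace ((mm - l) * (L * (c' + eps) * E l)) with ((c' + eps) * (E l * (2 * L * (mm - l))) / 2) by field. lra. }
      assert (K2 : (w - mm) * (L * vnorm d (y l) + F) <= Bmax * (w - mm)).
      { rewrite Rmult_comm. apply Rmult_le_compat_r; lra. }
      destruct Hmm as [Hm1 [Hm2 Hm3]].
      replace ((c' + eps) * E mm / 2 + Bmax * Rmax w rho - ((c' + eps) * E l / 2 + Bmax * rho)) with
        ((c' + eps) * (E mm - E l) / 2 + Bmax * (Rmax w rho - rho)) by field.
      rewrite Hm3. replace ((w - l) * (L * vnorm d (y l) + F)) with ((mm - l) * (L * vnorm d (y l) + F) + (w - mm) * (L * vnorm d (y l) + F)) by ring.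
      lra. }
  assert (Hsm' : (Kp p + 1) * Cg * pvar_semi m p x u r <= 1/2).
  { eapply Rle_trans; [|apply Hsmall]. rewrite EX. apply Rmult_le_compat_l. apply Rmult_le_pos. pose proof (Kp_bound p h_p0). lra. lra.
    apply (pvar_mono m p x a b u u v r); auto; lra. }
  rewrite EL, EF in HGm.
  pose proof (S6 d m p a b A f g Cf Cg x y H u r Gm Hau ltac:(lra) ltac:(lra) Hsm' HGm) as K.
  assert (HXr : pvar_semi m p x u r <= X) by (rewrite EX; apply (pvar_mono m p x a b u u v r); auto; lra).
  rewrite !EGm in K. rewrite (Rmin_right r rho), (Rmax_left r rho), (Rmin_left u rho), (Rmax_right u rho) in K by lra.
  assert (HEu : E u = 1) by (rewrite EE; rewrite Rminus_diag, Rmult_0_r, exp_0; auto).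
  rewrite HEu in K.
  assert (HEr : E rho <= E r) by (rewrite !EE; left; apply exp_increasing; assert (0 < 2 * L * (r - rho)) by (apply Rmult_lt_0_compat; lra); lra).
  assert (Bmax * (r - rho) <= Bmax * h). { apply Rmult_le_compat_l. rewrite EBmax.
    pose proof (vnorm_nonneg d (y u)). pose proof (pvar_nonneg d p y u v). apply Rplus_le_le_0_compat; auto. apply Rmult_le_pos; lra. lra. }
  rewrite <- EGs in K. assert (Gs * pvar_semi m p x u r <= Gs * X) by (apply Rmult_le_compat_l; auto).
  rewrite EPsi, <- EE.
  assert ((c' + eps) * E rho <= (c' + eps) * E r) by (apply Rmult_le_compat_l; lra).
  rewrite Ec' in *. lra.
Qed.

Lemma S7 d m p a b A f g Cf Cg x y (H : hyp d m p a b A f g Cf Cg x y) u v :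
  a <= u -> u <= v -> v <= b -> (Kp p + 1) * Cg * pvar_semi m p x u v <= 1/2 ->
  vnorm d (y u) + pvar_semi d p y u v <=
    (vnorm d (y u) + vnorm d (f vzero) / (opnorm d d A + Cf) + 2 * sup_norm_g d m g * pvar_semi m p x u v) * exp (2 * (opnorm d d A + Cf) * (v - u)).
Proof.
  intros Hau Huv Hvb Hsmall. pose proof H as H'. destruct H' as [h_p0 h_ab0 h_Cf0 h_Cg0 h_f0 h_g0 h_gb0 h_bx0 h_cx0 h_by0 h_sol0].
  set (L := opnorm d d A + Cf). set (F := vnorm d (f vzero)). set (X := pvar_semi m p x u v). set (Gs := sup_norm_g d m g).
  set (c' := vnorm d (y u) + F / L + 2 * Gs * X). set (Bmax := L * (vnorm d (y u) + pvar_semi d p y u v) + F).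
  assert (HL : 0 < L) by (unfold L; pose proof (opnorm_nonneg d d A); lra).
  assert (HF : 0 <= F) by apply vnorm_nonneg.
  assert (HFL : 0 <= F / L) by (apply Rmult_le_pos; [lra|left; apply Rinv_0_lt_compat; lra]).
  assert (HBm : 0 <= Bmax). { unfold Bmax. pose proof (vnorm_nonneg d (y u)). pose proof (pvar_nonneg d p y u v). 
    apply Rplus_le_le_0_compat; auto. apply Rmult_le_pos; lra. }
  assert (HEv : 0 < exp (2 * L * (v - u))) by apply exp_pos.
  assert (Key : forall eps, 0 < eps -> vnorm d (y u) + pvar_semi d p y u v <= (c' + eps) * exp (2 * L * (v - u)) - F / L).
  { intros eps He. set (h := eps / (2 * Bmax + 1)).
    assert (Hh : 0 < h) by (apply Rdiv_lt_0_compat; lra).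
    assert (HBh : 2 * Bmax * h <= eps).
    { unfold h. replace (2 * Bmax * (eps / (2 * Bmax + 1))) with (eps * (2 * Bmax / (2 * Bmax + 1))) by (field; lra).
      assert (2 * Bmax / (2 * Bmax + 1) <= 1). { apply Rmult_le_reg_r with (2 * Bmax + 1). lra. field_simplify; lra. } nra. }
    set (Psi := fun r => (c' + eps) * exp (2 * L * (r - u)) - F / L).
    assert (Ind : forall k, forall l, u <= l <= Rmin (u + INR k * h) v -> vnorm d (y u) + pvar_semi d p y u l <= Psi l).
    { induction k; intros l Hl.
      - simpl in Hl. rewrite Rmult_0_l, Rplus_0_r in Hl. rewrite Rmin_left in Hl by lra. assert (l = u) by lra. subst l.
        rewrite pvar_self. unfold Psi. rewrite Rminus_diag, Rmult_0_r, exp_0.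
        assert (0 <= 2 * Gs * X). { apply Rmult_le_pos. apply Rmult_le_pos. lra. apply S2'; auto. apply pvar_nonneg. }
        unfold c'. lra.
      - set (rho := Rmin (u + INR k * h) v) in *.
        assert (Hrho : u <= rho <= v). { unfold rho. split. apply Rmin_glb. pose proof (pos_INR k). nra. lra. apply Rmin_r. }
        destruct (Rle_dec l rho). apply IHk; lra.
        apply Rnot_le_lt in n.
        assert (Hl2 : l <= v /\ l <= u + INR (S k) * h). { split. eapply Rle_trans. apply Hl. apply Rmin_r. eapply Rle_trans. apply Hl. apply Rmin_l. }
        assert (Hrho2 : rho = u + INR k * h). { unfold rho in *. unfold Rmin in *. destruct (Rle_dec (u + INR k * h) v); lra. }
        rewrite S_INR in Hl2.
        apply (S7_step d m p a b A f g Cf Cg x y H u v rho h eps); auto; try lra.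
        }
    destruct (INR_unbounded ((v - u) / h)) as [k Hk].
    assert (v <= u + INR k * h). { assert ((v - u) / h * h <= INR k * h) by (apply Rmult_le_compat_r; lra).
      replace ((v-u)/h*h) with (v - u) in H0 by (field; lra). lra. }
    apply (Ind k). rewrite Rmin_right by lra. lra. }
  apply le_eps. intros eta Heta. specialize (Key (eta / exp (2 * L * (v - u))) ltac:(apply Rdiv_lt_0_compat; lra)).
  replace ((c' + eta / exp (2 * L * (v - u))) * exp (2 * L * (v - u))) with (c' * exp (2 * L * (v - u)) + eta) in Key by (field; lra).
  fold L F X Gs c'. lra.
Qed.

Theorem corollary2p4
  (d m : nat) (Hd : (1 <= d)%nat) (Hm : (1 <= m)%nat)
  (p : R) (Hp : 1 < p < 2) (a b : R) (Hab : a <= b)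
  (A : mat) (f : vec -> vec) (g : vec -> mat) (Cf Cg : R)
  (HCf : 0 < Cf) (HCg : 0 < Cg)
  (Hf : lipschitz_f d f Cf) (Hg : lipschitz_g d m g Cg)
  (HDg : C1_Lip_deriv d m g)
  (Hgb : exists M, forall u, opnorm d m (g u) <= M)
  (x : R -> vec) (Hx : in_Cpvar m p x a b)
  (y : R -> vec) (Hy : in_Cpvar d p y a b) (Hsol : is_solution d m A f g x a b y)
  (n : nat) (HN : is_N m p (gammaG p Cg) x a b n) :
  let L := opnorm d d A + Cf in
  pvar_norm d p y a b <=
    (vnorm d (y a)
     + Rmax (vnorm d (f vzero) / L) (2 * sup_norm_g d m g)
       * (1 + pvar_semi m p x a b) * INR n)
    * exp (2 * L * (b - a)) * rpow (INR n) ((p - 1) / p).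
Proof.
  intros L. destruct Hx as [Hcx Hbx]. destruct Hy as [_ Hby].
  assert (H : hyp d m p a b A f g Cf Cg x y) by (constructor; auto).
  destruct HN as [Hn1 [Hnb _]].
  set (gam := gammaG p Cg).
  destruct (Kp_bound p Hp) as [HK _].
  assert (Hgam : 0 < gam). { unfold gam, gammaG. apply Rdiv_lt_0_compat. lra. apply Rmult_lt_0_compat; lra. }
  assert (Hgam2 : (Kp p + 1) * Cg * gam = 1/2). { unfold gam, gammaG. field. split; lra. }
  set (tau' := fun k => tau m p gam x a b k).
  assert (Htr : forall k, a <= tau' k <= b) by (intros; apply tau_range; auto; lra).
  assert (Hts : forall k, tau' k <= tau' (S k) /\ pvar_semi m p x (tau' k) (tau' (S k)) <= gam)
    by (intros; apply tau_step; auto; lra).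
  assert (HL : 0 < L) by (unfold L; pose proof (opnorm_nonneg d d A); lra).
  set (F := vnorm d (f vzero)). set (Gs := sup_norm_g d m g). set (Xab := pvar_semi m p x a b).
  set (Lam := Rmax (F / L) (2 * Gs)). set (c := Lam * (1 + Xab)).
  assert (HGs : 0 <= Gs) by (apply S2'; auto).
  assert (HXab : 0 <= Xab) by apply pvar_nonneg.
  assert (HLam : 0 <= Lam). { unfold Lam. eapply Rle_trans. 2: apply Rmax_r. lra. }
  assert (Hc : 0 <= c) by (unfold c; apply Rmult_le_pos; lra).
  set (V := fun j => pvar_semi d p y (tau' j) (tau' (S j))).
  set (Phi := fun k => vnorm d (y a) + sumR k V).
  assert (Hper : forall k, vnorm d (y (tau' k)) + V k <= (vnorm d (y (tau' k)) + c) * exp (2 * L * (tau' (S k) - tau' k))).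
  { intros k. destruct (Hts k) as [T1 T2]. destruct (Htr k). destruct (Htr (S k)).
    assert (Hsm : (Kp p + 1) * Cg * pvar_semi m p x (tau' k) (tau' (S k)) <= 1/2).
    { rewrite <- Hgam2. apply Rmult_le_compat_l; auto. apply Rmult_le_pos; lra. }
    pose proof (S7 d m p a b A f g Cf Cg x y H (tau' k) (tau' (S k)) ltac:(lra) T1 ltac:(lra) Hsm) as K.
    fold L F Gs in K. unfold V. eapply Rle_trans. apply K. apply Rmult_le_compat_r. left; apply exp_pos.
    assert (pvar_semi m p x (tau' k) (tau' (S k)) <= Xab) by (apply (pvar_mono m p x a b); auto; lra).
    assert (F / L <= Lam) by apply Rmax_l. assert (2 * Gs <= Lam) by apply Rmax_r.
    assert (2 * Gs * pvar_semi m p x (tau' k) (tau' (S k)) <= Lam * Xab).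
    { apply Rmult_le_compat; try lra. apply pvar_nonneg. }
    unfold c. lra. }
  assert (Hind : forall k, vnorm d (y (tau' k)) <= Phi k /\ Phi k <= (vnorm d (y a) + INR k * c) * exp (2 * L * (tau' k - a))).
  { induction k.
    - unfold Phi. simpl. unfold tau'. simpl. rewrite Rminus_diag, Rmult_0_r, exp_0. lra.
    - destruct IHk as [I1 I2]. destruct (Hts k) as [T1 T2]. destruct (Htr k). destruct (Htr (S k)).
      assert (Hy1 : vnorm d (y (tau' (S k))) <= vnorm d (y (tau' k)) + V k).
      { pose proof (vnorm_add_le d (y (tau' (S k))) (y (tau' k))).
        pose proof (pvar_step d p y a b (tau' k) (tau' (S k)) ltac:(lra) ltac:(lra) T1 ltac:(lra) Hby). unfold V. lra. }
      assert (HPS : Phi (S k) = Phi k + V k) by (unfold Phi; simpl; ring).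
      set (Ek := exp (2 * L * (tau' (S k) - tau' k))).
      assert (HEk : 1 <= Ek). { unfold Ek. rewrite <- exp_0. destruct (Req_dec (tau' (S k)) (tau' k)). rewrite H4, Rminus_diag, Rmult_0_r; lra.
        left; apply exp_increasing. apply Rmult_lt_0_compat; lra. }
      specialize (Hper k). fold Ek in Hper.
      assert (HV : V k <= (Phi k + c) * Ek - Phi k).
      { assert ((vnorm d (y (tau' k)) + c) * Ek - vnorm d (y (tau' k)) <= (Phi k + c) * Ek - Phi k).
        { replace ((vnorm d (y (tau' k)) + c) * Ek - vnorm d (y (tau' k))) with (vnorm d (y (tau' k)) * (Ek - 1) + c * Ek) by ring.
          replace ((Phi k + c) * Ek - Phi k) with (Phi k * (Ek - 1) + c * Ek) by ring.
          apply Rplus_le_compat_r. apply Rmult_le_compat_r; lra. }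
        lra. }
      split. rewrite HPS. lra.
      rewrite HPS.
      assert (HE0 : 1 <= exp (2 * L * (tau' k - a))). { rewrite <- exp_0. destruct (Req_dec (tau' k) a). rewrite H4, Rminus_diag, Rmult_0_r; lra.
        left; apply exp_increasing. apply Rmult_lt_0_compat; lra. }
      assert (Hsplit : exp (2 * L * (tau' (S k) - a)) = exp (2 * L * (tau' k - a)) * Ek).
      { unfold Ek. rewrite <- exp_plus. f_equal. ring. }
      rewrite Hsplit, S_INR.
      assert (Phi k + V k <= (Phi k + c) * Ek) by lra.
      assert (Phi k + c <= (vnorm d (y a) + INR k * c + c) * exp (2 * L * (tau' k - a))).
      { assert (c <= c * exp (2 * L * (tau' k - a))) by (rewrite <- (Rmult_1_r c) at 1; apply Rmult_le_compat_l; lra). lra. }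
      assert ((Phi k + c) * Ek <= (vnorm d (y a) + INR k * c + c) * exp (2 * L * (tau' k - a)) * Ek) by (apply Rmult_le_compat_r; lra).
      replace ((vnorm d (y a) + (INR k + 1) * c) * (exp (2 * L * (tau' k - a)) * Ek)) with ((vnorm d (y a) + INR k * c + c) * exp (2 * L * (tau' k - a)) * Ek) by ring.
      lra. }
  assert (Hsub : forall k, pvar_semi d p y a (tau' k) <= sumR k V).
  { induction k. simpl. unfold tau'. simpl. rewrite pvar_self. lra.
    destruct (Hts k) as [T1 T2]. destruct (Htr k). destruct (Htr (S k)).
    pose proof (pvar_subadd d p y a b a (tau' k) (tau' (S k)) ltac:(lra) ltac:(lra) ltac:(lra) T1 ltac:(lra) Hby).
    simpl. unfold V at 2. lra. }
  assert (Htn : tau' n = b) by auto.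
  destruct (Hind n) as [_ Hfin]. rewrite Htn in Hfin.
  specialize (Hsub n). rewrite Htn in Hsub.
  unfold pvar_norm.
  assert (HR : 1 <= rpow (INR n) ((p - 1) / p)).
  { assert (Hq : 0 <= (p-1)/p) by (apply Rmult_le_pos; [lra|left; apply Rinv_0_lt_compat; lra]).
    assert (H1n : 1 <= INR n) by (replace 1 with (INR 1) by auto; apply le_INR; auto).
    pose proof (rpow_mono 1 (INR n) ((p-1)/p) Hq ltac:(lra)). rewrite rpow_one in H0. auto. }
  fold F Gs Xab Lam.
  replace (Lam * (1 + Xab) * INR n) with (INR n * c) by (unfold c; ring).
  assert (HPn : vnorm d (y a) + pvar_semi d p y a b <= Phi n) by (unfold Phi; lra).
  assert (0 <= (vnorm d (y a) + INR n * c) * exp (2 * L * (b - a))).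
  { apply Rmult_le_pos. pose proof (vnorm_nonneg d (y a)). pose proof (pos_INR n). nra. left; apply exp_pos. }
  assert ((vnorm d (y a) + INR n * c) * exp (2 * L * (b - a)) <= (vnorm d (y a) + INR n * c) * exp (2 * L * (b - a)) * rpow (INR n) ((p - 1) / p)).
  { rewrite <- (Rmult_1_r ((vnorm d (y a) + INR n * c) * exp (2 * L * (b - a)))) at 1. apply Rmult_le_compat_l; auto. }
  lra.
Qed.
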